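(* Let $X$ be a real Banach space, let $g:X^*\to(-\infty,+\infty]$ be a proper convex weak$^*$-lower semicontinuous function, and let $T:X^*\to2^X$ be a set-valued operator with $\mathrm{Gr}\,T\subset\mathrm{Gr}\,\partial g$, i.e. $T(x^* )\subset\partial g(x^* )\cap X$ for all $x^*$. Let $x_0^*\in D(T)$ and define $$h(x^* )=\sup\Big\{\sum_{i=0}^{n-1}\langle x_i,x_{i+1}^*-x_i^*\rangle+\langle x_n,x^*-x_n^*\rangle\Big\},\quad x^*\in X^*,$$ the supremum being over all integers $n\ge0$, all $x_1^*,\dots,x_n^*\in X^*$ and all $x_i\in T(x_i^* )$, $i=0,\dots,n$. Then: (i) if $\operatorname{int}(\operatorname{dom} g)\ne\emptyset$ and $D(T)$ is dense in $\operatorname{int}(\operatorname{dom} g)$, then $g(x^* )-g(x_0^* )=h(x^* )$ for all $x^*\in\operatorname{dom} g$; (ii) if $\operatorname{int}(\operatorname{dom}(g^*|_X))\ne\emptyset$ and $\operatorname{Im}T=\bigcup_{x^*}T(x^* )$ is dense in $\operatorname{int}(\operatorname{dom}(g^*|_X))$, then $g(x^* )-g(x_0^* )=h(x^* )$ for all $x^*\in X^*$.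
   Context: $X$ is identified with its canonical image in $X^{**}$; $\partial g(x^* )\cap X=\{x\in X:\langle y^*-x^*,x\rangle\le g(y^* )-g(x^* )\ \forall y^*\in X^*\}$ for $x^*\in\operatorname{dom} g=\{g<+\infty\}$. $D(T)=\{x^*:T(x^* )\ne\emptyset\}$, $\mathrm{Gr}\,T=\{(x^*,x):x\in T(x^* )\}$. $g^*|_X(x)=\sup_{x^*\in X^*}(\langle x^*,x\rangle-g(x^* ))$ for $x\in X$. Interiors and density are with respect to the norm topologies of $X^*$ and $X$ respectively. *)

(* Defs.v *)
From Stdlib Require Import Reals Lra.
Open Scope R_scope.

Record Banach := {
  car :> Type;
  vzero : car;
  vadd : car -> car -> car;
  vopp : car -> car;
  vscal : R -> car -> car;
  vnorm : car -> R;
  vadd_assoc : forall x y z, vadd x (vadd y z) = vadd (vadd x y) z;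
  vadd_comm : forall x y, vadd x y = vadd y x;
  vadd_0 : forall x, vadd x vzero = x;
  vadd_opp : forall x, vadd x (vopp x) = vzero;
  vscal_1 : forall x, vscal 1 x = x;
  vscal_assoc : forall a b x, vscal a (vscal b x) = vscal (a * b) x;
  vscal_distr_v : forall a x y, vscal a (vadd x y) = vadd (vscal a x) (vscal a y);
  vscal_distr_s : forall a b x, vscal (a + b) x = vadd (vscal a x) (vscal b x);
  vnorm_nonneg : forall x, 0 <= vnorm x;
  vnorm_eq0 : forall x, vnorm x = 0 -> x = vzero;
  vnorm_scal : forall a x, vnorm (vscal a x) = Rabs a * vnorm x;
  vnorm_triangle : forall x y, vnorm (vadd x y) <= vnorm x + vnorm y;
  vcomplete : forall u : nat -> car,
    (forall eps, 0 < eps -> exists N, forall m n, (N <= m)%nat -> (N <= n)%nat ->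
        vnorm (vadd (u m) (vopp (u n))) < eps) ->
    exists l, forall eps, 0 < eps -> exists N, forall n, (N <= n)%nat ->
        vnorm (vadd (u n) (vopp l)) < eps
}.

Definition vdist {X : Banach} (x y : X) : R := vnorm X (vadd X x (vopp X y)).

Record dual (X : Banach) := {
  dfun :> X -> R;
  dfun_add : forall x y, dfun (vadd X x y) = dfun x + dfun y;
  dfun_scal : forall a x, dfun (vscal X a x) = a * dfun x;
  dfun_bdd : exists M, forall x, Rabs (dfun x) <= M * vnorm X x
}.
Arguments dfun {X}.

(** ||a - b||_{X^*} < r  (dual operator norm; the infimum of admissible
    bounds is attained, so this is the literal unfolding). *)
Definition dual_dist_lt {X : Banach} (a b : dual X) (r : R) : Prop :=
  exists r', 0 <= r' /\ r' < r /\ forall x : X, Rabs (a x - b x) <= r' * vnorm X x.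

Definition dual_interior {X : Banach} (A : dual X -> Prop) (a : dual X) : Prop :=
  exists eps, 0 < eps /\ forall b, dual_dist_lt b a eps -> A b.
Definition dual_dense_in {X : Banach} (D U : dual X -> Prop) : Prop :=
  forall a, U a -> forall eps, 0 < eps -> exists b, D b /\ dual_dist_lt b a eps.
Definition X_interior {X : Banach} (A : X -> Prop) (x : X) : Prop :=
  exists eps, 0 < eps /\ forall y, vdist y x < eps -> A y.
Definition X_dense_in {X : Banach} (D U : X -> Prop) : Prop :=
  forall x, U x -> forall eps, 0 < eps -> exists y, D y /\ vdist y x < eps.

Inductive ER := Fin (r : R) | PInf.
Definition ER_le (u v : ER) : Prop :=
  match u, v with
  | Fin a, Fin b => a <= b
  | _, PInf => True
  | PInf, Fin _ => False
  end.
(** u - v, used only with v finite. *)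
Definition ER_minus (u v : ER) : ER :=
  match u, v with Fin a, Fin b => Fin (a - b) | _, _ => PInf end.
Definition ER_comb (t : R) (u v : ER) : ER :=
  match u, v with Fin a, Fin b => Fin (t * a + (1 - t) * b) | _, _ => PInf end.
Definition ER_sup (P : R -> Prop) (v : ER) : Prop :=
  (forall r, P r -> ER_le (Fin r) v) /\
  (forall w, (forall r, P r -> ER_le (Fin r) w) -> ER_le v w).

Section Fun.
Context {X : Banach}.

Definition dom (g : dual X -> ER) (a : dual X) : Prop := g a <> PInf.
Definition proper (g : dual X -> ER) : Prop := exists a, dom g a.
Definition convex (g : dual X -> ER) : Prop :=
  forall (a b c : dual X) (t : R), 0 < t < 1 ->
    (forall x, c x = t * a x + (1 - t) * b x) ->
    ER_le (g c) (ER_comb t (g a) (g b)).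

Definition weakstar_closed (C : dual X -> Prop) : Prop :=
  forall a, ~ C a -> exists (l : list X) (eps : R), 0 < eps /\
    forall b : dual X, (forall x, List.In x l -> Rabs (b x - a x) < eps) -> ~ C b.
Definition weakstar_lsc (g : dual X -> ER) : Prop :=
  forall c : R, weakstar_closed (fun a => ER_le (g a) (Fin c)).

Definition subdiff (g : dual X -> ER) (a : dual X) (x : X) : Prop :=
  dom g a /\ forall b : dual X, ER_le (Fin (b x - a x)) (ER_minus (g b) (g a)).

(** dom (g^*|_X) : g^*|_X(x) = sup_{a} (a x - g a) < +oo. *)
Definition dom_conj_X (g : dual X -> ER) (x : X) : Prop :=
  exists M, forall (a : dual X) (r : R), g a = Fin r -> a x - r <= M.

Definition DT (T : dual X -> X -> Prop) (a : dual X) : Prop := exists x, T a x.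
Definition ImT (T : dual X -> X -> Prop) (x : X) : Prop := exists a, T a x.

Fixpoint sumR (f : nat -> R) (n : nat) : R :=
  match n with O => 0 | S k => sumR f k + f k end.

(** The set of sums whose supremum is h(a). *)
Definition hset (T : dual X -> X -> Prop) (a0 a : dual X) (r : R) : Prop :=
  exists (n : nat) (as_ : nat -> dual X) (xs : nat -> X),
    as_ O = a0 /\ (forall i, (i <= n)%nat -> T (as_ i) (xs i)) /\
    r = sumR (fun i => as_ (S i) (xs i) - as_ i (xs i)) n
        + (a (xs n) - as_ n (xs n)).
End Fun.

(* Main.v *)
Require Import Defs.
From Stdlib Require Import Reals Lra Lia List Classical ClassicalEpsilon FunctionalExtensionality ProofIrrelevance.
Open Scope R_scope.

Arguments vadd_assoc {_}. Arguments vadd_comm {_}. Arguments vadd_0 {_}.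
Arguments vadd_opp {_}. Arguments vscal_1 {_}. Arguments vscal_assoc {_}.
Arguments vscal_distr_v {_}. Arguments vscal_distr_s {_}. Arguments vnorm_nonneg {_}.
Arguments vnorm_eq0 {_}. Arguments vnorm_scal {_}. Arguments vnorm_triangle {_}.
Arguments vcomplete {_}.
Arguments dfun_add {_}. Arguments dfun_scal {_}. Arguments dfun_bdd {_}.

Section Vec.
Variable Y : Banach.
Notation va := (vadd Y). Notation vs := (vscal Y). Notation vo := (vopp Y).
Notation vz := (vzero Y). Notation nm := (vnorm Y).

Lemma vadd_0l x : va vz x = x.
Proof. rewrite vadd_comm; apply vadd_0. Qed.

Lemma vadd_cancel x y z : va x y = va x z -> y = z.
Proof.
  intro H. rewrite <- (vadd_0l y), <- (vadd_0l z).
  rewrite <- (vadd_opp x), (vadd_comm x (vo x)), <- !vadd_assoc, H. reflexivity.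
Qed.

Lemma vscal_0 x : vs 0 x = vz.
Proof.
  apply (vadd_cancel (vs 0 x)). rewrite vadd_0, <- vscal_distr_s.
  now replace (0+0) with 0 by ring.
Qed.

Lemma vscal_z a : vs a vz = vz.
Proof.
  apply (vadd_cancel (vs a vz)). rewrite vadd_0, <- vscal_distr_v, vadd_0. reflexivity.
Qed.

Lemma vopp_scal x : vo x = vs (-1) x.
Proof.
  apply (vadd_cancel x). rewrite vadd_opp.
  rewrite <- (vscal_1 x) at 1. rewrite <- vscal_distr_s.
  replace (1 + -1) with 0 by ring. now rewrite vscal_0.
Qed.

Definition lin4 (u1 u2 u3 u4 : Y) (a b c d : R) :=
  va (va (vs a u1) (vs b u2)) (va (vs c u3) (vs d u4)).

Lemma vswap A B C D : va (va A B) (va C D) = va (va A C) (va B D).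
Proof.
  rewrite !vadd_assoc. f_equal. rewrite <- !vadd_assoc. f_equal. apply vadd_comm.
Qed.

Lemma lin_add_eq u1 u2 u3 u4 x y a b c d a' b' c' d' :
  x = lin4 u1 u2 u3 u4 a b c d -> y = lin4 u1 u2 u3 u4 a' b' c' d' ->
  va x y = lin4 u1 u2 u3 u4 (a+a') (b+b') (c+c') (d+d').
Proof.
  intros -> ->. unfold lin4. rewrite !vscal_distr_s.
  rewrite vswap. rewrite (vswap (vs a u1)), (vswap (vs c u3)). reflexivity.
Qed.

Lemma lin_scal_eq k u1 u2 u3 u4 x a b c d :
  x = lin4 u1 u2 u3 u4 a b c d ->
  vs k x = lin4 u1 u2 u3 u4 (k*a) (k*b) (k*c) (k*d).
Proof. intros ->. unfold lin4. now rewrite !vscal_distr_v, !vscal_assoc. Qed.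

Lemma lin_opp_eq u1 u2 u3 u4 x a b c d :
  x = lin4 u1 u2 u3 u4 a b c d ->
  vo x = lin4 u1 u2 u3 u4 (-1*a) (-1*b) (-1*c) (-1*d).
Proof. intros H. rewrite vopp_scal. now apply lin_scal_eq. Qed.

Lemma lin_zero u1 u2 u3 u4 : vz = lin4 u1 u2 u3 u4 0 0 0 0.
Proof. unfold lin4. now rewrite !vscal_0, !vadd_0. Qed.
Lemma lin_a1 u1 u2 u3 u4 : u1 = lin4 u1 u2 u3 u4 1 0 0 0.
Proof. unfold lin4. now rewrite !vscal_0, !vadd_0, vscal_1. Qed.
Lemma lin_a2 u1 u2 u3 u4 : u2 = lin4 u1 u2 u3 u4 0 1 0 0.
Proof. unfold lin4. now rewrite !vscal_0, !vadd_0, vadd_0l, vscal_1. Qed.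
Lemma lin_a3 u1 u2 u3 u4 : u3 = lin4 u1 u2 u3 u4 0 0 1 0.
Proof. unfold lin4. now rewrite !vscal_0, !vadd_0, vadd_0l, vscal_1. Qed.
Lemma lin_a4 u1 u2 u3 u4 : u4 = lin4 u1 u2 u3 u4 0 0 0 1.
Proof. unfold lin4. now rewrite !vscal_0, !vadd_0l, vscal_1. Qed.

Lemma lin4_ext u1 u2 u3 u4 a b c d a' b' c' d' :
  a = a' -> b = b' -> c = c' -> d = d' ->
  lin4 u1 u2 u3 u4 a b c d = lin4 u1 u2 u3 u4 a' b' c' d'.
Proof. intros -> -> -> ->; reflexivity. Qed.

End Vec.

Ltac reify u1 u2 u3 u4 e :=
  lazymatch e with
  | vadd ?Y ?x ?y =>
      let H1 := reify u1 u2 u3 u4 x in let H2 := reify u1 u2 u3 u4 y in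
      constr:(lin_add_eq Y _ _ _ _ _ _ _ _ _ _ _ _ _ _ H1 H2)
  | vscal ?Y ?k ?x =>
      let H := reify u1 u2 u3 u4 x in constr:(lin_scal_eq Y k _ _ _ _ _ _ _ _ _ H)
  | vopp ?Y ?x =>
      let H := reify u1 u2 u3 u4 x in constr:(lin_opp_eq Y _ _ _ _ _ _ _ _ _ H)
  | vzero ?Y => constr:(lin_zero Y u1 u2 u3 u4)
  | _ => lazymatch e with
         | u1 => constr:(lin_a1 _ u1 u2 u3 u4)
         | u2 => constr:(lin_a2 _ u1 u2 u3 u4)
         | u3 => constr:(lin_a3 _ u1 u2 u3 u4)
         | u4 => constr:(lin_a4 _ u1 u2 u3 u4)
         end
  end.

Ltac vring4 u1 u2 u3 u4 :=
  lazymatch goal with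
  | |- ?E1 = ?E2 =>
    let H1 := reify u1 u2 u3 u4 E1 in let H2 := reify u1 u2 u3 u4 E2 in
    refine (eq_trans H1 (eq_trans _ (eq_sym H2))); apply lin4_ext
  end.



Section Norm.
Variable Y : Banach.
Notation va := (vadd Y). Notation vs := (vscal Y). Notation vo := (vopp Y).
Notation vz := (vzero Y). Notation nm := (vnorm Y).

Lemma nm_zero : nm vz = 0.
Proof. rewrite <- (vscal_0 Y vz), vnorm_scal, Rabs_R0. ring. Qed.

Lemma nm_opp x : nm (vo x) = nm x.
Proof. rewrite vopp_scal, vnorm_scal, Rabs_left by lra. ring. Qed.

Lemma vdist_sym (x y : Y) : vdist x y = vdist y x.
Proof.
  unfold vdist. rewrite <- nm_opp. f_equal. vring4 x y (vzero Y) (vzero Y); ring.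
Qed.

Lemma vdist_tri (x y z : Y) : vdist x z <= vdist x y + vdist y z.
Proof.
  unfold vdist. replace (va x (vo z)) with (va (va x (vo y)) (va y (vo z))).
  apply vnorm_triangle. vring4 x y z (vzero Y); ring.
Qed.

Lemma vdist_self (x : Y) : vdist x x = 0.
Proof. unfold vdist. rewrite vadd_opp. apply nm_zero. Qed.

Lemma vdist_nonneg (x y : Y) : 0 <= vdist x y.
Proof. apply vnorm_nonneg. Qed.

Lemma vdist_eq0 (x y : Y) : vdist x y = 0 -> x = y.
Proof.
  unfold vdist. intro H. apply vnorm_eq0 in H.
  transitivity (va (va x (vo y)) y). vring4 x y (vzero Y) (vzero Y); ring.
  rewrite H. apply vadd_0l.
Qed.

Lemma vdist_add_r (x w : Y) : vdist (va x w) x = nm w.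
Proof. unfold vdist. f_equal. vring4 x w (vzero Y) (vzero Y); ring. Qed.

Lemma vdist_scal_trans (x y : Y) (k : R) (a : Y) :
  vdist (va (vs k x) a) (va (vs k y) a) = Rabs k * vdist x y.
Proof. unfold vdist. rewrite <- vnorm_scal. f_equal. vring4 x y a (vzero Y); ring. Qed.

Lemma dfun_zero (s : dual Y) : s vz = 0.
Proof. rewrite <- (vscal_0 Y vz), dfun_scal. ring. Qed.
Lemma dfun_opp (s : dual Y) x : s (vo x) = - s x.
Proof. rewrite vopp_scal, dfun_scal. ring. Qed.
Lemma dfun_sub (s : dual Y) x y : s (va x (vo y)) = s x - s y.
Proof. rewrite dfun_add, dfun_opp. ring. Qed.

Lemma dfun_bdd_pos (s : dual Y) : exists K, 0 < K /\ forall x, Rabs (s x) <= K * nm x.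
Proof.
  destruct (dfun_bdd s) as [M HM]. exists (Rabs M + 1). split.
  pose proof (Rabs_pos M); lra.
  intro x. eapply Rle_trans. apply HM. apply Rmult_le_compat_r. apply vnorm_nonneg.
  pose proof (Rle_abs M); lra.
Qed.

Lemma dfun_lip (s : dual Y) : exists K, 0 < K /\ forall x y, Rabs (s x - s y) <= K * vdist x y.
Proof.
  destruct (dfun_bdd_pos s) as [K [HK H]]. exists K; split; auto.
  intros x y. rewrite <- dfun_sub. apply H.
Qed.

Definition seg (p q : Y) (t : R) := va (vs (1-t) p) (vs t q).

Lemma dfun_seg (s : dual Y) p q t : s (seg p q t) = (1-t) * s p + t * s q.
Proof. unfold seg. now rewrite dfun_add, !dfun_scal. Qed.

Lemma seg_0 p q : seg p q 0 = p.
Proof. unfold seg. vring4 p q (vzero Y) (vzero Y); ring. Qed.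
Lemma seg_1 p q : seg p q 1 = q.
Proof. unfold seg. vring4 p q (vzero Y) (vzero Y); ring. Qed.

Lemma vdist_seg_l p q t : vdist (seg p q t) p = Rabs t * vdist q p.
Proof. unfold vdist, seg. rewrite <- vnorm_scal. f_equal. vring4 p q (vzero Y) (vzero Y); ring. Qed.

Lemma vdist_seg_seg p q t t' : vdist (seg p q t) (seg p q t') = Rabs (t - t') * vdist q p.
Proof. unfold vdist, seg. rewrite <- vnorm_scal. f_equal. vring4 p q (vzero Y) (vzero Y); ring. Qed.

End Norm.

Lemma nat_big (A : R) : exists n : nat, A < INR n.
Proof. destruct (INR_archimed 1 A) as [n Hn]. lra. exists n. lra. Qed.

Lemma le_eps (a b : R) : (forall eps, 0 < eps -> a < b + eps) -> a <= b.
Proof.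
  intro H. destruct (Rle_or_lt a b) as [h|h]; auto.
  specialize (H ((a-b)/2) ltac:(lra)). lra.
Qed.

Lemma Rabs_le_inv x a : Rabs x <= a -> -a <= x <= a.
Proof. intro H. pose proof (Rle_abs x). pose proof (Rle_abs (-x)). rewrite Rabs_Ropp in H1. lra. Qed.

Definition fr (e : ER) := match e with Fin r => r | PInf => 0 end.

Section Conv.
Variable Y : Banach.
Variable F : Y -> ER.
Notation va := (vadd Y). Notation vs := (vscal Y). Notation vo := (vopp Y).
Notation vz := (vzero Y). Notation nm := (vnorm Y).

Definition domY y := F y <> PInf.
Definition Fv y := fr (F y).
Definition convY := forall p q t, 0 < t < 1 ->
  ER_le (F (seg Y p q t)) (ER_comb (1-t) (F p) (F q)).
Definition lscY := forall y c, ~ ER_le (F y) (Fin c) ->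
  exists d, 0 < d /\ forall z, vdist z y < d -> ~ ER_le (F z) (Fin c).
Definition intY y := exists r, 0 < r /\ forall z, vdist z y < r -> domY z.
Definition subg y (s : dual Y) := domY y /\
  forall z, ER_le (Fin (s z - s y)) (ER_minus (F z) (F y)).

Lemma domY_Fin y : domY y -> F y = Fin (Fv y).
Proof. unfold domY, Fv; destruct (F y); simpl; congruence. Qed.

Lemma ER_le_Fin_dom z M : ER_le (F z) (Fin M) -> domY z /\ Fv z <= M.
Proof. unfold domY, Fv. destruct (F z); simpl; intros H; [split; [congruence|auto]|contradiction]. Qed.

Lemma not_le_Fin z c : domY z -> ~ ER_le (F z) (Fin c) -> c < Fv z.
Proof. unfold domY, Fv. destruct (F z); simpl; intros H1 H2; [lra|congruence]. Qed.

Lemma subg_ineq y s z : subg y s -> domY z -> s z - s y <= Fv z - Fv y.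
Proof.
  intros [Hy H] Hz. specialize (H z). rewrite (domY_Fin _ Hy), (domY_Fin _ Hz) in H.
  exact H.
Qed.

Lemma intY_dom y : intY y -> domY y.
Proof. intros [r [Hr H]]. apply H. rewrite vdist_self. lra. Qed.

Hypothesis Fconv : convY.
Hypothesis Flsc : lscY.

Lemma conv_real p q t : domY p -> domY q -> 0 <= t <= 1 ->
  domY (seg Y p q t) /\ Fv (seg Y p q t) <= (1-t) * Fv p + t * Fv q.
Proof.
  intros Hp Hq Ht.
  destruct (Req_dec t 0) as [->|H0]. rewrite seg_0. split; auto. lra.
  destruct (Req_dec t 1) as [->|H1]. rewrite seg_1. split; auto. lra.
  pose proof (Fconv p q t ltac:(lra)) as HC.
  rewrite (domY_Fin p Hp), (domY_Fin q Hq) in HC. simpl in HC.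
  unfold domY, Fv in *. destruct (F (seg Y p q t)); simpl in *.
  split. congruence. lra. contradiction.
Qed.

Lemma lsc_low y eps : domY y -> 0 < eps ->
  exists d, 0 < d /\ forall z, vdist z y < d -> domY z -> Fv y - eps < Fv z.
Proof.
  intros Hy He. destruct (Flsc y (Fv y - eps)) as [d [Hd H]].
  rewrite (domY_Fin _ Hy); simpl; lra.
  exists d; split; auto. intros z Hz Hdz. apply not_le_Fin; auto.
Qed.

Lemma int_seg p q t : domY p -> intY q -> 0 < t <= 1 -> intY (seg Y p q t).
Proof.
  intros Hp [r [Hr Hq]] Ht. exists (t*r). split. nra.
  intros z Hz.
  set (q' := va q (vs (/t) (va z (vo (seg Y p q t))))).
  assert (Hq' : domY q').
  { apply Hq. unfold q'. rewrite vdist_add_r, vnorm_scal.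
    fold (vdist z (seg Y p q t)). rewrite Rabs_right by (apply Rle_ge, Rlt_le, Rinv_0_lt_compat; lra).
    apply (Rmult_lt_reg_l t). lra. rewrite <- Rmult_assoc, Rinv_r by lra. lra. }
  replace z with (seg Y p q' t). apply conv_real; auto; lra.
  unfold q', seg. vring4 p q z (vzero Y); field; lra.
Qed.

Lemma seg_cont p q eps : domY p -> domY q -> 0 < eps ->
  exists t0, 0 < t0 <= 1 /\ forall t, 0 < t <= t0 ->
    domY (seg Y p q t) /\ Rabs (Fv (seg Y p q t) - Fv p) < eps.
Proof.
  intros Hp Hq He. destruct (lsc_low p eps Hp He) as [d [Hd Hl]].
  set (A := Rabs (Fv q - Fv p) + 1). set (D := vdist q p + 1).
  assert (HA : 0 < A) by (unfold A; pose proof (Rabs_pos (Fv q - Fv p)); lra).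
  assert (HD : 0 < D) by (unfold D; pose proof (vdist_nonneg _ q p); lra).
  exists (Rmin 1 (Rmin (eps / A) (d / D))). split.
  split. apply Rmin_glb_lt; [lra|apply Rmin_glb_lt; apply Rdiv_lt_0_compat; lra]. apply Rmin_l.
  intros t [Ht0 Ht].
  assert (Ht1 : t <= 1) by (eapply Rle_trans; [exact Ht| apply Rmin_l]).
  assert (Ht2 : t <= eps / A) by (eapply Rle_trans; [exact Ht| eapply Rle_trans; [apply Rmin_r|apply Rmin_l]]).
  assert (Ht3 : t <= d / D) by (eapply Rle_trans; [exact Ht| eapply Rle_trans; [apply Rmin_r|apply Rmin_r]]).
  destruct (conv_real p q t Hp Hq ltac:(lra)) as [Hs Hv]. split; auto.
  assert (Hdist : vdist (seg Y p q t) p < d).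
  { rewrite vdist_seg_l, Rabs_right by lra.
    apply Rle_lt_trans with (d / D * vdist q p).
    apply Rmult_le_compat_r; [apply vdist_nonneg|lra].
    unfold Rdiv. rewrite Rmult_assoc. apply Rlt_le_trans with (d * 1); [|lra].
    apply Rmult_lt_compat_l; auto. unfold D.
    pose proof (vdist_nonneg Y q p). apply (Rmult_lt_reg_l (vdist q p + 1)). lra.
    rewrite <- Rmult_assoc, Rinv_r by lra. lra. }
  specialize (Hl _ Hdist Hs).
  assert (t * (Fv q - Fv p) < eps).
  { apply Rlt_le_trans with (t * A).
    apply Rmult_lt_compat_l. lra. unfold A. pose proof (Rle_abs (Fv q - Fv p)). lra.
    apply Rle_trans with (eps / A * A). apply Rmult_le_compat_r; lra.
    unfold Rdiv. rewrite Rmult_assoc, Rinv_l by lra. lra. }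
  apply Rabs_def1; lra.
Qed.

(* Baire-type local upper bound *)
Lemma local_bound y : intY y ->
  exists r M, 0 < r /\ forall z, vdist z y < r -> domY z /\ Fv z <= M.
Proof.
  intros [rho [Hrho Hdom]].
  apply NNPP. intro NB.
  assert (U : forall z, vdist z y < rho/2 -> forall r, 0 < r -> forall M : R,
             exists z', vdist z' z < r /\ ~ ER_le (F z') (Fin M)).
  { intros z Hz r Hr M. apply NNPP. intro H.
    assert (H' : forall z', vdist z' z < r -> ER_le (F z') (Fin M)).
    { intros z' Hz'. apply NNPP. intro H2. apply H. exists z'; auto. }
    clear H. apply NB.
    set (A := va (vs 2 y) (vo z)).
    assert (HA : domY A).
    { apply Hdom. unfold A. replace (vdist (va (vs 2 y) (vo z)) y) with (vdist y z).
      rewrite vdist_sym; lra. unfold vdist. f_equal. vring4 y z (vzero Y) (vzero Y); ring. }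
    exists (r/2), ((Fv A + M)/2). split. lra.
    intros z'' Hz''.
    set (B := va z (vs 2 (va z'' (vo y)))).
    assert (HB : ER_le (F B) (Fin M)).
    { apply H'. unfold B. rewrite vdist_add_r, vnorm_scal, Rabs_right by lra.
      fold (vdist z'' y). lra. }
    apply ER_le_Fin_dom in HB. destruct HB as [HB1 HB2].
    replace z'' with (seg Y A B (1/2)).
    destruct (conv_real A B (1/2) HA HB1 ltac:(lra)) as [h1 h2]. split; auto. lra.
    unfold seg, A, B. vring4 y z z'' (vzero Y); field. }
  set (Inv := fun st : Y * R => 0 < snd st /\ vdist (fst st) y + 2 * snd st < rho / 2).
  set (P := fun (k : nat) (st st' : Y * R) => Inv st ->
      Inv st' /\ vdist (fst st') (fst st) < snd st /\ 4 * snd st' <= snd st /\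
      forall z, vdist z (fst st') < 4 * snd st' -> ~ ER_le (F z) (Fin (INR k))).
  assert (Hstep : forall k st, exists st', P k st st').
  { intros k [z r]. destruct (classic (Inv (z, r))) as [HI|HI].
    - destruct HI as [Hr Hz]; simpl in Hr, Hz.
      assert (Hz2 : vdist z y < rho/2) by lra.
      destruct (U z Hz2 r Hr (INR k)) as [z' [Hz'1 Hz'2]].
      destruct (Flsc z' (INR k) Hz'2) as [d [Hd Hd2]].
      exists (z', Rmin d r / 4). intros _. simpl.
      assert (Hm : 0 < Rmin d r) by (apply Rmin_glb_lt; lra).
      pose proof (Rmin_l d r). pose proof (Rmin_r d r).
      pose proof (vdist_tri _ z' z y).
      split. split; simpl; lra.
      split. auto. split. lra.
      intros z0 Hz0. apply Hd2. lra.
    - exists (z, r). intro; contradiction. }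
  set (stepf := fun k st => proj1_sig (constructive_indefinite_description _ (Hstep k st))).
  assert (Hsf : forall k st, P k st (stepf k st)).
  { intros k st. unfold stepf. destruct (constructive_indefinite_description _ _); auto. }
  set (seqf := fix seqf (n : nat) : Y * R :=
         match n with O => (y, rho / 8) | S k => stepf k (seqf k) end).
  assert (Hinv : forall n, Inv (seqf n)).
  { induction n. split; simpl. lra. rewrite vdist_self. lra.
    simpl. apply (Hsf n (seqf n) IHn). }
  set (zs := fun n => fst (seqf n)). set (rs := fun n => snd (seqf n)).
  assert (Hr0 : forall n, 0 < rs n) by (intro n; apply (Hinv n)).
  assert (Hstep1 : forall n, vdist (zs (S n)) (zs n) < rs n /\ 4 * rs (S n) <= rs n /\
            forall z, vdist z (zs (S n)) < 4 * rs (S n) -> ~ ER_le (F z) (Fin (INR n))).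
  { intro n. unfold zs, rs. simpl. destruct (Hsf n (seqf n) (Hinv n)) as [_ H]. exact H. }
  assert (HD : forall k m, vdist (zs (m + k)%nat) (zs k) + 2 * rs (m + k)%nat <= 2 * rs k).
  { intros k m. induction m. simpl. rewrite vdist_self. lra.
    simpl. destruct (Hstep1 (m + k)%nat) as [h1 [h2 _]].
    pose proof (vdist_tri _ (zs (S (m + k))) (zs (m + k)%nat) (zs k)).
    pose proof (Hr0 (m+k)%nat). lra. }
  assert (HD' : forall k m, (k <= m)%nat -> vdist (zs m) (zs k) <= 2 * rs k).
  { intros k m Hkm. replace m with ((m - k) + k)%nat by lia.
    pose proof (HD k (m - k)%nat). pose proof (Hr0 ((m-k)+k)%nat). lra. }
  assert (Hrdec : forall n, rs n * (INR n + 1) <= rho / 8).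
  { induction n. unfold rs; simpl. lra.
    rewrite S_INR. destruct (Hstep1 n) as [_ [h _]]. pose proof (pos_INR n).
    pose proof (Hr0 n). pose proof (Hr0 (S n)). nra. }
  assert (Hsmall : forall eps, 0 < eps -> exists N, rs N < eps).
  { intros eps He. destruct (nat_big (rho / 8 / eps)) as [N HN]. exists N.
    specialize (Hrdec N). pose proof (pos_INR N).
    apply (Rmult_lt_reg_r (INR N + 1)). lra.
    apply Rle_lt_trans with (rho/8); auto.
    apply Rlt_le_trans with (eps * INR N). 2: nra.
    apply (Rmult_lt_reg_l (/eps)). apply Rinv_0_lt_compat; lra.
    rewrite <- Rmult_assoc, Rinv_l by lra. lra. }
  destruct (vcomplete zs) as [L HL].
  { intros eps He. destruct (Hsmall (eps/4) ltac:(lra)) as [N HN]. exists N.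
    intros m n Hm Hn. fold (vdist (zs m) (zs n)).
    pose proof (HD' N m Hm). pose proof (HD' N n Hn).
    pose proof (vdist_tri _ (zs m) (zs N) (zs n)). rewrite (vdist_sym _ (zs N) (zs n)) in H1.
    lra. }
  assert (HLk : forall k, vdist L (zs k) <= 2 * rs k).
  { intro k. apply le_eps. intros eps He. destruct (HL eps He) as [N HN].
    specialize (HN (max N k) (Nat.le_max_l _ _)). fold (vdist (zs (max N k)) L) in HN.
    pose proof (HD' k (max N k) (Nat.le_max_r _ _)).
    pose proof (vdist_tri _ L (zs (max N k)) (zs k)). rewrite vdist_sym in HN. lra. }
  assert (HLdom : domY L).
  { apply Hdom. specialize (HLk 0%nat). unfold zs, rs in HLk. simpl in HLk. lra. }
  destruct (nat_big (Fv L)) as [k Hk].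
  destruct (Hstep1 k) as [_ [_ H3]]. apply (H3 L).
  pose proof (HLk (S k)). pose proof (Hr0 (S k)). lra.
  rewrite (domY_Fin _ HLdom). simpl. lra.
Qed.

End Conv.

Lemma sumR_ext f g n : (forall k, (k < n)%nat -> f k = g k) -> sumR f n = sumR g n.
Proof. induction n; simpl; intros H; auto. rewrite IHn by (intros; apply H; lia). rewrite H by lia. auto. Qed.

Lemma sumR_minus f g n : sumR (fun k => f k - g k) n = sumR f n - sumR g n.
Proof. induction n; simpl. ring. rewrite IHn. ring. Qed.

Section Conv2.
Variable Y : Banach.
Variable F : Y -> ER.
Notation va := (vadd Y). Notation vs := (vscal Y). Notation vo := (vopp Y).
Notation vz := (vzero Y). Notation nm := (vnorm Y).
Notation domY := (domY Y F). Notation Fv := (Fv Y F). Notation intY := (intY Y F).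
Notation subg := (subg Y F).
Hypothesis Fconv : convY Y F.
Hypothesis Flsc : lscY Y F.

Lemma int_cont y : intY y -> forall eps, 0 < eps ->
  exists d, 0 < d /\ forall z, vdist z y < d -> domY z /\ Rabs (Fv z - Fv y) < eps.
Proof.
  intros Hy eps He. destruct (local_bound Y F Fconv Flsc y Hy) as [r [M [Hr HB]]].
  assert (HMy : Fv y <= M) by (apply HB; rewrite vdist_self; lra).
  set (K := M - Fv y + 1).
  set (lam := Rmin (1/2) (eps / (2*K))).
  assert (HK : 0 < K) by (unfold K; lra).
  assert (Hl0 : 0 < lam) by (apply Rmin_glb_lt; [lra| apply Rdiv_lt_0_compat; lra]).
  assert (Hl1 : lam <= 1/2) by apply Rmin_l.
  assert (Hl2 : lam * K <= eps / 2).
  { apply Rle_trans with (eps / (2*K) * K). apply Rmult_le_compat_r. lra. apply Rmin_r.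
    right. field. lra. }
  exists (r * lam). split. nra.
  intros z Hz.
  set (w := va z (vo y)).
  assert (Hw : nm w < r * lam) by exact Hz.
  assert (Hw' : nm w / lam < r).
  { apply (Rmult_lt_reg_r lam). lra. unfold Rdiv. rewrite Rmult_assoc, Rinv_l by lra. lra. }
  set (q1 := va y (vs (/lam) w)).
  assert (Hq1 : domY q1 /\ Fv q1 <= M).
  { apply HB. unfold q1. rewrite vdist_add_r, vnorm_scal, Rabs_right.
    rewrite Rmult_comm. exact Hw'. apply Rle_ge, Rlt_le, Rinv_0_lt_compat; lra. }
  set (q2 := va y (vs (- / lam) w)).
  assert (Hq2 : domY q2 /\ Fv q2 <= M).
  { apply HB. unfold q2. rewrite vdist_add_r, vnorm_scal, Rabs_left.
    rewrite Ropp_involutive, Rmult_comm. exact Hw'.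
    apply Ropp_lt_gt_0_contravar, Rinv_0_lt_compat; lra. }
  assert (Hz1 : z = seg Y y q1 lam).
  { unfold q1, w, seg. vring4 y z (vzero Y) (vzero Y); field; lra. }
  destruct (conv_real Y F Fconv y q1 lam (intY_dom Y F y Hy) (proj1 Hq1) ltac:(lra)) as [Hdz Hv1].
  rewrite <- Hz1 in Hdz, Hv1.
  assert (Hy2 : y = seg Y z q2 (lam / (1 + lam))).
  { unfold q2, w, seg. vring4 y z (vzero Y) (vzero Y); field; lra. }
  assert (Hmu : 0 <= lam / (1 + lam) <= 1).
  { split. apply Rmult_le_pos. lra. left; apply Rinv_0_lt_compat; lra.
    apply (Rmult_le_reg_r (1+lam)). lra. unfold Rdiv. rewrite Rmult_assoc, Rinv_l by lra. lra. }
  destruct (conv_real Y F Fconv z q2 (lam/(1+lam)) Hdz (proj1 Hq2) Hmu) as [_ Hv2].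
  rewrite <- Hy2 in Hv2.
  split; auto.
  assert (Hlow : (1 + lam) * Fv y - lam * M <= Fv z).
  { assert (E : Fv y * (1 + lam) <= Fv z + lam * Fv q2).
    { replace (Fv z + lam * Fv q2) with (((1 - lam/(1+lam)) * Fv z + lam/(1+lam) * Fv q2) * (1 + lam)) by (field; lra).
      apply Rmult_le_compat_r; lra. }
    destruct Hq2. assert (lam * Fv q2 <= lam * M) by (apply Rmult_le_compat_l; lra). lra. }
  destruct Hq1. assert (lam * Fv q1 <= lam * M) by (apply Rmult_le_compat_l; lra).
  assert (lam * K = lam * M - lam * Fv y + lam) by (unfold K; ring).
  apply Rabs_def1; lra.
Qed.

Lemma seg_bound p q : intY p -> intY q ->
  exists r M, 0 < r /\ forall t, 0 <= t <= 1 -> forall z, vdist z (seg Y p q t) < r ->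
     domY z /\ Fv z <= M.
Proof.
  intros Hp Hq. destruct (local_bound Y F Fconv Flsc p Hp) as [r1 [M1 [Hr1 H1]]].
  destruct (local_bound Y F Fconv Flsc q Hq) as [r2 [M2 [Hr2 H2]]].
  exists (Rmin r1 r2), (Rmax M1 M2). split. apply Rmin_glb_lt; lra.
  intros t Ht z Hz.
  set (w := va z (vo (seg Y p q t))).
  assert (Hw : nm w < Rmin r1 r2) by exact Hz.
  pose proof (Rmin_l r1 r2). pose proof (Rmin_r r1 r2).
  destruct (H1 (va p w)) as [Hd1 Hv1]. rewrite vdist_add_r; lra.
  destruct (H2 (va q w)) as [Hd2 Hv2]. rewrite vdist_add_r; lra.
  replace z with (seg Y (va p w) (va q w) t).
  destruct (conv_real Y F Fconv _ _ t Hd1 Hd2 Ht) as [h1 h2]. split; auto.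
  pose proof (Rmax_l M1 M2). pose proof (Rmax_r M1 M2). nra.
  unfold w, seg. vring4 p q z (vzero Y); ring.
Qed.

Lemma subg_bound y s r m M : 0 < r ->
  (forall z, vdist z y < r -> domY z /\ m <= Fv z <= M) -> subg y s ->
  forall z, Rabs (s z) <= (2 * (M - m) / r) * nm z.
Proof.
  intros Hr HB Hs z.
  destruct (Req_dec (nm z) 0) as [H0|H0].
  { apply vnorm_eq0 in H0. subst z. rewrite dfun_zero, Rabs_R0, nm_zero. lra. }
  assert (Hn : 0 < nm z) by (pose proof (vnorm_nonneg z); lra).
  set (k := r / (2 * nm z)).
  assert (Hk : 0 < k) by (unfold k; apply Rdiv_lt_0_compat; lra).
  assert (Hkn : k * nm z = r/2) by (unfold k; field; lra).
  destruct (HB y) as [Hdy Hy]. rewrite vdist_self; lra.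
  assert (A1 : k * s z <= M - m).
  { destruct (HB (va y (vs k z))) as [Hd Hv].
    rewrite vdist_add_r, vnorm_scal, Rabs_right by lra. lra.
    pose proof (subg_ineq Y F _ _ _ Hs Hd). rewrite dfun_add, dfun_scal in H. lra. }
  assert (A2 : - (k * s z) <= M - m).
  { destruct (HB (va y (vs (-k) z))) as [Hd Hv].
    rewrite vdist_add_r, vnorm_scal, Rabs_left by lra. lra.
    pose proof (subg_ineq Y F _ _ _ Hs Hd). rewrite dfun_add, dfun_scal in H. lra. }
  assert (Hm : 0 <= M - m) by lra.
  assert (E : 2 * (M - m) / r * nm z = (M - m) / k) by (unfold k; field; lra).
  rewrite E. apply Rabs_le. split.
  - apply (Rmult_le_reg_l k). auto. unfold Rdiv. replace (k * - ((M - m) * / k)) with (-(M-m)) by (field; lra). lra.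
  - apply (Rmult_le_reg_l k). auto. unfold Rdiv. replace (k * ((M - m) * / k)) with (M-m) by (field; lra). lra.
Qed.

Lemma sandwich N (ys : nat -> Y) (ss : nat -> dual Y) :
  (forall k, (k <= N)%nat -> subg (ys k) (ss k)) ->
  let E := sumR (fun k => ss (S k) (va (ys (S k)) (vo (ys k))) - ss k (va (ys (S k)) (vo (ys k)))) N in
  Fv (ys N) - Fv (ys O) - E <= sumR (fun k => ss k (va (ys (S k)) (vo (ys k)))) N /\
  sumR (fun k => ss (S k) (va (ys (S k)) (vo (ys k)))) N <= Fv (ys N) - Fv (ys O) + E.
Proof.
  intros HS E. unfold E. rewrite sumR_minus.
  assert (H : forall n, (n <= N)%nat ->
    sumR (fun k => ss k (va (ys (S k)) (vo (ys k)))) n <= Fv (ys n) - Fv (ys O) <=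
    sumR (fun k => ss (S k) (va (ys (S k)) (vo (ys k)))) n).
  { induction n; intros Hn; simpl. lra.
    destruct (IHn ltac:(lia)) as [h1 h2].
    assert (Hk := HS n ltac:(lia)). assert (Hk1 := HS (S n) Hn).
    pose proof (subg_ineq Y F _ _ _ Hk (proj1 Hk1)).
    pose proof (subg_ineq Y F _ _ _ Hk1 (proj1 Hk)).
    rewrite !dfun_sub. lra. }
  destruct (H N (le_n N)). lra.
Qed.

End Conv2.

Lemma sumR_le f g n : (forall k, (k < n)%nat -> f k <= g k) -> sumR f n <= sumR g n.
Proof. induction n; simpl; intros H. lra. pose proof (H n ltac:(lia)). pose proof (IHn ltac:(intros; apply H; lia)). lra. Qed.

Lemma sumR_tele (d : nat -> R) (a c : R) n :
  sumR (fun k => a * (d (S k) - d k) + c) n = a * (d n - d O) + c * INR n.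
Proof. induction n. simpl. ring. cbn [sumR]. rewrite IHn, S_INR. ring. Qed.

Section Core.
Variable Y : Banach.
Variable F : Y -> ER.
Notation va := (vadd Y). Notation vs := (vscal Y). Notation vo := (vopp Y).
Notation vz := (vzero Y). Notation nm := (vnorm Y).
Notation domY := (domY Y F). Notation Fv := (Fv Y F). Notation intY := (intY Y F).
Notation subg := (subg Y F).
Hypothesis Fconv : convY Y F.
Hypothesis Flsc : lscY Y F.
Variable Sg : Y -> dual Y -> Prop.
Hypothesis HS : forall y s, Sg y s -> subg y s.
Hypothesis Hdense : forall y, intY y -> forall eta, 0 < eta ->
  exists y' s', Sg y' s' /\ vdist y' y < eta.

Lemma core p s0 q eps delta : intY p -> intY q -> Sg p s0 -> 0 < eps -> 0 < delta ->
  exists N (ys : nat -> Y) (ss : nat -> dual Y),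
    ys O = p /\ ss O = s0 /\ (forall k, (k <= N)%nat -> Sg (ys k) (ss k)) /\
    vdist (ys N) q < delta /\
    sumR (fun k => ss (S k) (va (ys (S k)) (vo (ys k))) - ss k (va (ys (S k)) (vo (ys k)))) N <= eps.
Proof.
  intros Hp Hq Hs0 He Hdl.
  destruct (seg_bound Y F Fconv Flsc p q Hp Hq) as [r1 [M [Hr1 HB]]].
  pose proof (intY_dom Y F p Hp) as Hdp.
  destruct (dfun_bdd_pos Y s0) as [K0 [HK0 HK0b]].
  set (d := vdist q p).
  assert (Hd : 0 <= d) by apply vdist_nonneg.
  set (m := Fv p - K0 * (r1 + d)).
  assert (RB : forall t, 0 <= t <= 1 -> forall z, vdist z (seg Y p q t) < r1 ->
               domY z /\ m <= Fv z <= M).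
  { intros t Ht z Hz. destruct (HB t Ht z Hz) as [Hdz Hvz]. split; auto. split; auto.
    pose proof (subg_ineq Y F _ _ z (HS _ _ Hs0) Hdz).
    pose proof (HK0b (va z (vo p))). rewrite dfun_sub in H0. fold (vdist z p) in H0.
    pose proof (vdist_tri Y z (seg Y p q t) p). rewrite vdist_seg_l, Rabs_right in H1 by lra.
    assert (vdist z p <= r1 + d).
    { unfold d. assert (t * vdist q p <= vdist q p). { pose proof (vdist_nonneg Y q p). nra. } lra. }
    assert (K0 * vdist z p <= K0 * (r1 + d)) by (apply Rmult_le_compat_l; lra).
    apply Rabs_le_inv in H0 as [H0' _]. unfold m. lra. }
  set (L := 4 * (M - m) / r1 + 1).
  assert (SB : forall t, 0 <= t <= 1 -> forall y s, vdist y (seg Y p q t) < r1/2 -> subg y s ->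
               forall z, Rabs (s z) <= L * nm z).
  { intros t Ht y s Hy Hs z.
    assert (H := subg_bound Y F y s (r1/2) m M ltac:(lra)).
    eapply Rle_trans. apply H; auto.
    intros z' Hz'. apply (RB t Ht). pose proof (vdist_tri Y z' y (seg Y p q t)). lra.
    unfold L. pose proof (vnorm_nonneg z).
    replace (2 * (M - m) / (r1 / 2)) with (4 * (M - m) / r1) by (field; lra). nra. }
  assert (HMm : m <= M).
  { destruct (RB 0 ltac:(lra) p) as [_ h]. rewrite seg_0, vdist_self. lra. lra. }
  assert (HL : 0 < L).
  { unfold L. assert (0 <= 4 * (M - m) / r1) by (apply Rmult_le_pos; [lra| left; apply Rinv_0_lt_compat; lra]). lra. }
  destruct (nat_big (4 * L * d / eps)) as [N0 HN0].
  set (N := S N0).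
  assert (HN : 0 < INR N) by (unfold N; rewrite S_INR; pose proof (pos_INR N0); lra).
  assert (HN2 : 4 * L * d < eps * INR N).
  { unfold N. rewrite S_INR.
    assert (4 * L * d / eps * eps = 4 * L * d) by (field; lra). nra. }
  set (eta := Rmin (r1/2) (Rmin delta (eps / (8 * L * INR N)))).
  assert (Heta : 0 < eta).
  { unfold eta. apply Rmin_glb_lt. lra. apply Rmin_glb_lt. lra. apply Rdiv_lt_0_compat. lra.
    apply Rmult_lt_0_compat; lra. }
  assert (Heta1 : eta <= r1/2) by apply Rmin_l.
  assert (Heta2 : eta <= delta) by (eapply Rle_trans; [apply Rmin_r| apply Rmin_l]).
  assert (Heta3 : eta <= eps / (8 * L * INR N)) by (eapply Rle_trans; [apply Rmin_r| apply Rmin_r]).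
  set (tk := fun k : nat => seg Y p q (INR k / INR N)).
  assert (Htk : forall k, (k <= N)%nat -> 0 <= INR k / INR N <= 1).
  { intros k Hk. apply le_INR in Hk. pose proof (pos_INR k). split.
    apply Rmult_le_pos; [lra | left; apply Rinv_0_lt_compat; lra].
    apply (Rmult_le_reg_r (INR N)). lra. unfold Rdiv. rewrite Rmult_assoc, Rinv_l by lra. lra. }
  assert (Hch : forall k : nat, exists ys : Y * dual Y, (1 <= k <= N)%nat ->
            Sg (fst ys) (snd ys) /\ vdist (fst ys) (tk k) < eta).
  { intro k. destruct (classic (1 <= k <= N)%nat) as [Hk|Hk].
    - assert (Hi : intY (tk k)).
      { unfold tk. apply int_seg; auto. destruct (Htk k ltac:(lia)). split; auto.
        destruct Hk as [Hk _]. apply le_INR in Hk. simpl in Hk.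
        apply Rdiv_lt_0_compat; lra. }
      destruct (Hdense _ Hi eta Heta) as [y' [s' [h1 h2]]]. exists (y', s'). auto.
    - exists (p, s0). intro; contradiction. }
  set (ch := fun k => proj1_sig (constructive_indefinite_description _ (Hch k))).
  assert (Hchs : forall k, (1 <= k <= N)%nat -> Sg (fst (ch k)) (snd (ch k)) /\ vdist (fst (ch k)) (tk k) < eta).
  { intro k. unfold ch. destruct (constructive_indefinite_description _ _). auto. }
  set (ys := fun k => match k with O => p | _ => fst (ch k) end).
  set (ss := fun k => match k with O => s0 | _ => snd (ch k) end).
  assert (Hys : forall k, (k <= N)%nat -> Sg (ys k) (ss k) /\ vdist (ys k) (tk k) < eta).
  { intros [|k] Hk. simpl. split; auto. unfold tk. replace (INR 0 / INR N) with 0 by (unfold Rdiv; rewrite INR_0; ring).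
    rewrite seg_0, vdist_self. lra. apply Hchs. lia. }
  assert (Hbd : forall k, (k <= N)%nat -> forall z, Rabs (ss k z) <= L * nm z).
  { intros k Hk z. destruct (Hys k Hk) as [h1 h2]. apply (SB (INR k / INR N) (Htk k Hk) (ys k) (ss k)).
    unfold tk in h2; lra. apply HS; auto. }
  assert (Hterm : forall k, (k < N)%nat ->
     ss (S k) (va (ys (S k)) (vo (ys k))) - ss k (va (ys (S k)) (vo (ys k))) <=
     / INR N * ((ss (S k) q - ss (S k) p) - (ss k q - ss k p)) + 4 * L * eta).
  { intros k Hk.
    destruct (Hys (S k) Hk) as [_ D1]. destruct (Hys k ltac:(lia)) as [_ D0].
    assert (B1 := Hbd (S k) Hk). assert (B0 := Hbd k ltac:(lia)).
    rewrite !dfun_sub.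
    assert (E : forall (s : dual Y) y t, s y = s t + s (va y (vo t))) by (intros; rewrite dfun_sub; ring).
    rewrite (E (ss (S k)) (ys (S k)) (tk (S k))), (E (ss (S k)) (ys k) (tk k)),
            (E (ss k) (ys (S k)) (tk (S k))), (E (ss k) (ys k) (tk k)).
    unfold tk. rewrite !dfun_seg. rewrite S_INR.
    pose proof (B1 (va (ys (S k)) (vo (seg Y p q ((INR k + 1) / INR N))))) as b1.
    pose proof (B1 (va (ys k) (vo (seg Y p q (INR k / INR N))))) as b2.
    pose proof (B0 (va (ys (S k)) (vo (seg Y p q ((INR k + 1) / INR N))))) as b3.
    pose proof (B0 (va (ys k) (vo (seg Y p q (INR k / INR N))))) as b4.
    unfold tk in D1, D0. rewrite S_INR in D1.
    fold (vdist (ys (S k)) (seg Y p q ((INR k + 1) / INR N))) in b1, b3.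
    fold (vdist (ys k) (seg Y p q (INR k / INR N))) in b2, b4.
    assert (L * vdist (ys (S k)) (seg Y p q ((INR k + 1) / INR N)) <= L * eta) by (apply Rmult_le_compat_l; lra).
    assert (L * vdist (ys k) (seg Y p q (INR k / INR N)) <= L * eta) by (apply Rmult_le_compat_l; lra).
    apply Rabs_le_inv in b1. apply Rabs_le_inv in b2. apply Rabs_le_inv in b3. apply Rabs_le_inv in b4.
    match goal with |- ?l <= _ => assert (El : l =
      / INR N * ((ss (S k) q - ss (S k) p) - (ss k q - ss k p)) +
      (ss (S k) (va (ys (S k)) (vo (seg Y p q ((INR k + 1) / INR N)))) -
       ss (S k) (va (ys k) (vo (seg Y p q (INR k / INR N)))) -
       ss k (va (ys (S k)) (vo (seg Y p q ((INR k + 1) / INR N)))) +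
       ss k (va (ys k) (vo (seg Y p q (INR k / INR N)))))) by (field; lra) end.
    rewrite El. lra. }
  exists N, ys, ss. split. reflexivity. split. reflexivity. split.
  intros k Hk; apply Hys; auto. split.
  { destruct (Hys N (le_n N)) as [_ h]. unfold tk in h.
    replace (INR N / INR N) with 1 in h by (field; lra). rewrite seg_1 in h. lra. }
  eapply Rle_trans. apply sumR_le. exact Hterm.
  rewrite (sumR_tele (fun k => ss k q - ss k p) (/ INR N) (4 * L * eta)).
  assert (A1 : Rabs (ss N q - ss N p) <= L * d).
  { rewrite <- dfun_sub. apply Hbd. lia. }
  assert (A2 : Rabs (ss O q - ss O p) <= L * d).
  { rewrite <- dfun_sub. apply Hbd. lia. }
  apply Rabs_le_inv in A1. apply Rabs_le_inv in A2.
  assert (A3 : / INR N * ((ss N q - ss N p) - (ss O q - ss O p)) <= eps / 2).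
  { apply Rle_trans with (/ INR N * (2 * L * d)).
    apply Rmult_le_compat_l. left; apply Rinv_0_lt_compat; lra. lra.
    apply (Rmult_le_reg_l (INR N)). lra. rewrite <- Rmult_assoc, Rinv_r by lra. lra. }
  assert (A4 : 4 * L * eta * INR N <= eps / 2).
  { apply Rle_trans with (4 * L * (eps / (8 * L * INR N)) * INR N).
    apply Rmult_le_compat_r. lra. apply Rmult_le_compat_l. lra. auto.
    right. field. split; lra. }
  lra.
Qed.

End Core.

Section DualSpace.
Variable X : Banach.
Notation nm := (vnorm X).

Lemma dual_ext (a b : dual X) : (forall x, a x = b x) -> a = b.
Proof.
  destruct a as [fa pa1 pa2 pa3], b as [fb pb1 pb2 pb3]; simpl. intro H.
  assert (fa = fb) by (apply functional_extensionality; auto). subst fb.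
  f_equal; apply proof_irrelevance.
Qed.

Lemma Rabs0 x : Rabs x <= 0 -> x = 0.
Proof. intro H. destruct (Req_dec x 0); auto. pose proof (Rabs_pos_lt x H0). lra. Qed.

Definition mkdual (f : X -> R) (h1 : forall x y, f (vadd X x y) = f x + f y)
  (h2 : forall a x, f (vscal X a x) = a * f x) (h3 : exists M, forall x, Rabs (f x) <= M * nm x) : dual X :=
  {| dfun := f; dfun_add := h1; dfun_scal := h2; dfun_bdd := h3 |}.

Definition dzero : dual X.
Proof.
  refine (mkdual (fun _ => 0) _ _ _). intros; ring. intros; ring.
  exists 0. intros. rewrite Rabs_R0. lra.
Defined.

Definition dadd (a b : dual X) : dual X.
Proof.
  refine (mkdual (fun x => a x + b x) _ _ _).
  intros; rewrite !dfun_add; ring. intros; rewrite !dfun_scal; ring.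
  destruct (dfun_bdd a) as [Ma Ha], (dfun_bdd b) as [Mb Hb]. exists (Ma + Mb). intro x.
  eapply Rle_trans. apply Rabs_triang. specialize (Ha x); specialize (Hb x). lra.
Defined.

Definition dscal (t : R) (a : dual X) : dual X.
Proof.
  refine (mkdual (fun x => t * a x) _ _ _).
  intros; rewrite !dfun_add; ring. intros; rewrite !dfun_scal; ring.
  destruct (dfun_bdd a) as [Ma Ha]. exists (Rabs t * Ma). intro x.
  rewrite Rabs_mult, Rmult_assoc. apply Rmult_le_compat_l. apply Rabs_pos. auto.
Defined.

Definition dopp (a : dual X) : dual X := dscal (-1) a.

Definition BS (a : dual X) (M : R) := 0 <= M /\ forall x, Rabs (a x) <= M * nm x.

Lemma BS_ex (a : dual X) : exists M, BS a M.
Proof.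
  destruct (dfun_bdd_pos X a) as [K [HK H]]. exists K. split; auto. lra.
Qed.

Definition dnorm (a : dual X) : R.
Proof.
  refine (- proj1_sig (completeness (fun y => exists M, BS a M /\ y = - M) _ _)).
  exists 0. intros y [M [[HM _] ->]]. lra.
  destruct (BS_ex a) as [M HM]. exists (-M). eauto.
Defined.

Lemma dnorm_spec (a : dual X) : BS a (dnorm a) /\ forall M, BS a M -> dnorm a <= M.
Proof.
  unfold dnorm. destruct (completeness _ _ _) as [l [Hub Hl]]. simpl.
  assert (H1 : forall M, BS a M -> - l <= M).
  { intros M HM. assert (-M <= l) by (apply Hub; eauto). lra. }
  split; auto.
  assert (Hl0 : l <= 0). { apply Hl. intros y [M [[HM _] ->]]. lra. }
  split. lra.
  intro x. apply le_eps. intros eps He.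
  assert (Hex : exists M, BS a M /\ M < - l + eps / (nm x + 1)).
  { apply NNPP. intro Hn.
    assert (l <= l - eps / (nm x + 1)).
    { apply Hl. intros y [M [HM ->]]. destruct (Rle_or_lt (- l + eps / (nm x + 1)) M) as [h|h].
      lra. exfalso. apply Hn. eauto. }
    assert (0 < eps / (nm x + 1)) by (apply Rdiv_lt_0_compat; [lra| pose proof (vnorm_nonneg x); lra]).
    lra. }
  destruct Hex as [M [[HM0 HM] HMl]].
  pose proof (vnorm_nonneg x).
  assert (M * nm x <= (- l + eps / (nm x + 1)) * nm x) by (apply Rmult_le_compat_r; lra).
  assert (eps / (nm x + 1) * nm x < eps).
  { apply (Rmult_lt_reg_r (nm x + 1)). lra.
    replace (eps / (nm x + 1) * nm x * (nm x + 1)) with (eps * nm x) by (field; lra). nra. }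
  specialize (HM x). nra.
Qed.

Lemma dnorm_bound (a : dual X) (x : X) : Rabs (a x) <= dnorm a * nm x.
Proof. apply (proj2 (proj1 (dnorm_spec a))). Qed.
Lemma dnorm_nonneg (a : dual X) : 0 <= dnorm a.
Proof. apply (proj1 (proj1 (dnorm_spec a))). Qed.
Lemma dnorm_le (a : dual X) M : BS a M -> dnorm a <= M.
Proof. apply (proj2 (dnorm_spec a)). Qed.

Lemma unif_lim (v : nat -> R) (l c B : R) (N : nat) :
  Un_cv v l -> (forall m, (N <= m)%nat -> Rabs (c - v m) <= B) -> Rabs (c - l) <= B.
Proof.
  intros Hv H. apply le_eps. intros eps He. destruct (Hv eps He) as [N1 HN1].
  specialize (HN1 (max N N1) (Nat.le_max_r _ _)). specialize (H (max N N1) (Nat.le_max_l _ _)).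
  unfold Rdist in HN1. pose proof (Rabs_triang (c - v (max N N1)) (v (max N N1) - l)).
  replace (c - v (max N N1) + (v (max N N1) - l)) with (c - l) in H0 by ring. lra.
Qed.

Lemma dcomplete : forall u : nat -> dual X,
    (forall eps, 0 < eps -> exists N, forall m n, (N <= m)%nat -> (N <= n)%nat ->
        dnorm (dadd (u m) (dopp (u n))) < eps) ->
    exists l, forall eps, 0 < eps -> exists N, forall n, (N <= n)%nat ->
        dnorm (dadd (u n) (dopp l)) < eps.
Proof.
  intros u Hc.
  assert (Hpt : forall m n x, Rabs (u m x - u n x) <= dnorm (dadd (u m) (dopp (u n))) * nm x).
  { intros m n x. pose proof (dnorm_bound (dadd (u m) (dopp (u n))) x). simpl in H.
    replace (u m x + -1 * u n x) with (u m x - u n x) in H by ring. auto. }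
  assert (Hcc : forall x, Cauchy_crit (fun n => u n x)).
  { intros x eps He. destruct (Hc (eps / (nm x + 1))) as [N HN].
    apply Rdiv_lt_0_compat; [lra | pose proof (vnorm_nonneg x); lra].
    exists N. intros n m Hn Hm. unfold Rdist. eapply Rle_lt_trans. apply Hpt.
    pose proof (HN n m Hn Hm). pose proof (vnorm_nonneg x).
    pose proof (dnorm_nonneg (dadd (u n) (dopp (u m)))).
    apply Rle_lt_trans with (eps / (nm x + 1) * nm x). apply Rmult_le_compat_r; lra.
    apply (Rmult_lt_reg_r (nm x + 1)). lra.
    replace (eps / (nm x + 1) * nm x * (nm x + 1)) with (eps * nm x) by (field; lra). nra. }
  set (Lf := fun x => proj1_sig (R_complete _ (Hcc x))).
  assert (HLf : forall x, Un_cv (fun n => u n x) (Lf x)).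
  { intro x. unfold Lf. destruct (R_complete _ _). auto. }
  assert (Hunif : forall eps, 0 < eps -> exists N, forall n x, (N <= n)%nat ->
                   Rabs (u n x - Lf x) <= eps * nm x).
  { intros eps He. destruct (Hc eps He) as [N HN]. exists N. intros n x Hn.
    apply (unif_lim (fun m => u m x) _ _ _ N (HLf x)). intros m Hm.
    eapply Rle_trans. apply Hpt. apply Rmult_le_compat_r. apply vnorm_nonneg.
    left. apply HN; auto. }
  assert (Hadd : forall x y, Lf (vadd X x y) = Lf x + Lf y).
  { intros x y. apply Rminus_diag_uniq. apply Rabs0.
    apply le_eps. intros eps He.
    set (C := nm (vadd X x y) + nm x + nm y + 1).
    assert (HC : 0 < C) by (unfold C; pose proof (vnorm_nonneg (vadd X x y)); pose proof (vnorm_nonneg x); pose proof (vnorm_nonneg y); lra).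
    destruct (Hunif (eps / C) ltac:(apply Rdiv_lt_0_compat; lra)) as [N HN].
    pose proof (HN N (vadd X x y) (le_n N)). pose proof (HN N x (le_n N)). pose proof (HN N y (le_n N)).
    rewrite dfun_add in H.
    apply Rabs_le_inv in H. apply Rabs_le_inv in H0. apply Rabs_le_inv in H1.
    assert (eps / C * nm (vadd X x y) + eps / C * nm x + eps / C * nm y < eps).
    { replace (eps / C * nm (vadd X x y) + eps / C * nm x + eps / C * nm y) with (eps * (C - 1) / C) by (unfold C in *; field; lra).
      apply (Rmult_lt_reg_r C). lra. replace (eps * (C - 1) / C * C) with (eps * C - eps) by (field; lra). lra. }
    rewrite Rplus_0_l. apply Rabs_def1; lra. }
  assert (Hscal : forall a x, Lf (vscal X a x) = a * Lf x).
  { intros a x. apply Rminus_diag_uniq. apply Rabs0.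
    apply le_eps. intros eps He.
    set (C := nm (vscal X a x) + Rabs a * nm x + 1).
    assert (HC : 0 < C) by (unfold C; pose proof (vnorm_nonneg (vscal X a x)); pose proof (vnorm_nonneg x); pose proof (Rabs_pos a); nra).
    destruct (Hunif (eps / C) ltac:(apply Rdiv_lt_0_compat; lra)) as [N HN].
    pose proof (HN N (vscal X a x) (le_n N)). pose proof (HN N x (le_n N)).
    rewrite dfun_scal in H.
    assert (H1 : Rabs (a * u N x - a * Lf x) <= Rabs a * (eps / C * nm x)).
    { rewrite <- Rmult_minus_distr_l, Rabs_mult. apply Rmult_le_compat_l. apply Rabs_pos. auto. }
    pose proof (Rabs_triang (a * u N x - Lf (vscal X a x)) (- (a * u N x - a * Lf x))).
    rewrite Rabs_Ropp in H2.
    replace (a * u N x - Lf (vscal X a x) + - (a * u N x - a * Lf x)) with (- (Lf (vscal X a x) - a * Lf x)) in H2 by ring.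
    rewrite Rabs_Ropp in H2. rewrite <- Rabs_Ropp in H.
    replace (- (a * u N x - Lf (vscal X a x))) with (Lf (vscal X a x) - a * u N x) in H by ring.
    rewrite Rplus_0_l.
    assert (eps / C * nm (vscal X a x) + Rabs a * (eps / C * nm x) < eps).
    { replace (eps / C * nm (vscal X a x) + Rabs a * (eps / C * nm x)) with (eps * (C - 1) / C) by (unfold C in *; field; lra).
      apply (Rmult_lt_reg_r C). lra. replace (eps * (C - 1) / C * C) with (eps * C - eps) by (field; lra). lra. }
    rewrite <- Rabs_Ropp in H. replace (- (Lf (vscal X a x) - a * u N x)) with (a * u N x - Lf (vscal X a x)) in H by ring.
    lra. }
  assert (Hbdd : exists M, forall x, Rabs (Lf x) <= M * nm x).
  { destruct (Hunif 1 ltac:(lra)) as [N HN]. exists (dnorm (u N) + 1). intro x.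
    pose proof (HN N x (le_n N)). pose proof (dnorm_bound (u N) x).
    pose proof (Rabs_triang (u N x) (- (u N x - Lf x))). rewrite Rabs_Ropp in H1.
    replace (u N x + - (u N x - Lf x)) with (Lf x) in H1 by ring. lra. }
  exists (mkdual Lf Hadd Hscal Hbdd).
  intros eps He. destruct (Hunif (eps/2) ltac:(lra)) as [N HN]. exists N. intros n Hn.
  apply Rle_lt_trans with (eps/2); [|lra]. apply dnorm_le. split. lra.
  intro x. simpl. replace (u n x + -1 * Lf x) with (u n x - Lf x) by ring. auto.
Qed.

Definition XS : Banach.
Proof.
  refine {| car := dual X; vzero := dzero; vadd := dadd; vopp := dopp; vscal := dscal;
            vnorm := dnorm; vcomplete := dcomplete |};
  try (intros; apply dual_ext; intros; simpl; ring).
  - apply dnorm_nonneg.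
  - intros a Ha. apply dual_ext. intro x. simpl. pose proof (dnorm_bound a x).
    rewrite Ha, Rmult_0_l in H. pose proof (Rabs_pos (a x)). assert (Rabs (a x) = 0) by lra.
    apply Rabs0. lra.
  - intros t a. apply Rle_antisym.
    + apply dnorm_le. split. apply Rmult_le_pos. apply Rabs_pos. apply dnorm_nonneg.
      intro x. simpl. rewrite Rabs_mult, Rmult_assoc. apply Rmult_le_compat_l. apply Rabs_pos. apply dnorm_bound.
    + destruct (Req_dec t 0) as [->|Ht]. rewrite Rabs_R0, Rmult_0_l. apply dnorm_nonneg.
      assert (Hta : 0 < Rabs t) by (apply Rabs_pos_lt; auto).
      assert (dnorm a <= dnorm (dscal t a) / Rabs t).
      { apply dnorm_le. split. apply Rmult_le_pos. apply dnorm_nonneg. left; apply Rinv_0_lt_compat; auto.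
        intro x. pose proof (dnorm_bound (dscal t a) x). simpl in H. rewrite Rabs_mult in H.
        apply (Rmult_le_reg_l (Rabs t)). auto.
        replace (Rabs t * (dnorm (dscal t a) / Rabs t * nm x)) with (dnorm (dscal t a) * nm x) by (field; lra). auto. }
      apply (Rmult_le_compat_l (Rabs t)) in H; [|lra].
      replace (Rabs t * (dnorm (dscal t a) / Rabs t)) with (dnorm (dscal t a)) in H by (field; lra). lra.
  - intros a b. apply dnorm_le. split. pose proof (dnorm_nonneg a); pose proof (dnorm_nonneg b); lra.
    intro x. simpl. eapply Rle_trans. apply Rabs_triang. pose proof (dnorm_bound a x). pose proof (dnorm_bound b x). lra.
Defined.

Lemma XS_dist (a b : dual X) : @vdist XS a b = dnorm (dadd a (dopp b)).
Proof. reflexivity. Qed.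

Lemma dual_dist_lt_iff (a b : dual X) eps : dual_dist_lt a b eps <-> @vdist XS a b < eps.
Proof.
  rewrite XS_dist. split.
  - intros [r' [Hr0 [Hr Hb]]]. apply Rle_lt_trans with r'; auto. apply dnorm_le. split; auto.
    intro x. simpl. replace (a x + -1 * b x) with (a x - b x) by ring. auto.
  - intro H. exists (dnorm (dadd a (dopp b))). split. apply dnorm_nonneg. split; auto.
    intro x. pose proof (dnorm_bound (dadd a (dopp b)) x). simpl in H0.
    replace (a x + -1 * b x) with (a x - b x) in H0 by ring. auto.
Qed.

Definition ev (x : X) : dual XS.
Proof.
  refine {| dfun := fun z : XS => dfun (z : dual X) x |}.
  intros; simpl; reflexivity. intros; simpl; reflexivity.
  exists (nm x). intro z. rewrite Rmult_comm. apply dnorm_bound.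
Defined.

End DualSpace.

Section Chain.
Variable X : Banach.
Variable T : dual X -> X -> Prop.
Variable a0 : dual X.

Definition chainP (b : dual X) (x : X) (C : R) :=
  exists n (as_ : nat -> dual X) (xs : nat -> X),
    as_ O = a0 /\ (forall i, (i <= n)%nat -> T (as_ i) (xs i)) /\ as_ n = b /\ xs n = x /\
    C = sumR (fun i => as_ (S i) (xs i) - as_ i (xs i)) n.

Lemma chainP0 x0 : T a0 x0 -> chainP a0 x0 0.
Proof.
  intro H. exists O, (fun _ => a0), (fun _ => x0). repeat split; auto.
Qed.

Lemma chainP_ext b x C b' x' : chainP b x C -> T b' x' -> chainP b' x' (C + b' x - b x).
Proof.
  intros [n [as_ [xs [H0 [HT [Hb [Hx HC]]]]]]] HT'.
  exists (S n), (fun i => if Nat.leb i n then as_ i else b'), (fun i => if Nat.leb i n then xs i else x').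
  split. simpl. auto. split.
  { intros i Hi. destruct (Nat.leb i n) eqn:E. apply Nat.leb_le in E. auto. auto. }
  split. rewrite (proj2 (Nat.leb_gt (S n) n) ltac:(lia)). auto.
  split. rewrite (proj2 (Nat.leb_gt (S n) n) ltac:(lia)). auto.
  cbn [sumR]. rewrite (proj2 (Nat.leb_gt (S n) n) ltac:(lia)), (proj2 (Nat.leb_le n n) ltac:(lia)).
  rewrite (sumR_ext _ (fun i => as_ (S i) (xs i) - as_ i (xs i))).
  rewrite HC, Hb, Hx. ring.
  intros k Hk. rewrite (proj2 (Nat.leb_le k n) ltac:(lia)), (proj2 (Nat.leb_le (S k) n) ltac:(lia)). auto.
Qed.

Lemma chainP_hset b x C a : chainP b x C -> hset T a0 a (C + a x - b x).
Proof.
  intros [n [as_ [xs [H0 [HT [Hb [Hx HC]]]]]]].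
  exists n, as_, xs. split; auto. split; auto. subst. ring.
Qed.

Lemma hset_chainP a r : hset T a0 a r -> exists b x C, chainP b x C /\ r = C + a x - b x.
Proof.
  intros [n [as_ [xs [H0 [HT Hr]]]]].
  exists (as_ n), (xs n), (sumR (fun i => as_ (S i) (xs i) - as_ i (xs i)) n).
  split. exists n, as_, xs. repeat split; auto. rewrite Hr. ring.
Qed.


Lemma hset_step b r x c : hset T a0 b r -> T b x -> hset T a0 c (r + c x - b x).
Proof.
  intros H HT. destruct (hset_chainP b r H) as [b1 [x1 [C [HP ->]]]].
  pose proof (chainP_ext _ _ _ _ _ HP HT).
  pose proof (chainP_hset _ _ _ c H0). replace (C + b x1 - b1 x1 + c x - b x) with (C + b x1 - b1 x1 + c x - b x) by ring.
  exact H1.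
Qed.

Variable g : dual X -> ER.
Hypothesis HT : forall a x, T a x -> subdiff g a x.

Lemma chainP_upper b x C : chainP b x C -> dom g a0 -> dom g b /\ C <= fr (g b) - fr (g a0).
Proof.
  intros [n [as_ [xs [H0 [HTs [Hb [Hx HC]]]]]]] Ha0. subst.
  assert (forall k, (k <= n)%nat -> dom g (as_ k) /\
      sumR (fun i => as_ (S i) (xs i) - as_ i (xs i)) k <= fr (g (as_ k)) - fr (g (as_ O))).
  { induction k; intros Hk. split; auto. simpl. lra.
    destruct (IHk ltac:(lia)) as [h1 h2].
    destruct (HT _ _ (HTs (S k) Hk)) as [hd _].
    destruct (HT _ _ (HTs k ltac:(lia))) as [_ hs].
    specialize (hs (as_ (S k))). split; auto. cbn [sumR].
    unfold dom in *. destruct (g (as_ (S k))), (g (as_ k)); simpl in *; try congruence. lra. }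
  apply H. auto.
Qed.

Lemma hset_upper a r : hset T a0 a r -> dom g a0 -> ER_le (Fin r) (ER_minus (g a) (g a0)).
Proof.
  intros H Ha0. destruct (hset_chainP a r H) as [b [x [C [HP ->]]]].
  destruct (chainP_upper b x C HP Ha0) as [Hb HC].
  assert (HTb : T b x).
  { destruct HP as [n [as_ [xs [_ [HTs [Hb' [Hx _]]]]]]]. subst. auto. }
  destruct (HT _ _ HTb) as [_ hs]. specialize (hs a).
  unfold dom in *. destruct (g a), (g b), (g a0); simpl in *; try congruence; lra.
Qed.

End Chain.

Lemma ER_sup_intro (P : R -> Prop) v :
  (forall r, P r -> ER_le (Fin r) v) ->
  (forall c, ~ ER_le v (Fin c) -> exists r, P r /\ c < r) -> ER_sup P v.
Proof.
  intros H1 H2. split; auto. intros w Hw. destruct w as [c|].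
  - apply NNPP. intro Hn. destruct (H2 c Hn) as [r [Hr Hc]]. specialize (Hw r Hr). simpl in Hw. lra.
  - destruct v; simpl; auto.
Qed.

Lemma int_near (Y : Banach) (F : Y -> ER) y : intY Y F y ->
  exists rho, 0 < rho /\ forall z, vdist z y < rho -> intY Y F z.
Proof.
  intros [r [Hr H]]. exists (r/2). split. lra. intros z Hz. exists (r/2). split. lra.
  intros w Hw. apply H. pose proof (vdist_tri Y w z y). lra.
Qed.

Fixpoint lsum {X : Banach} (l : list X) : R :=
  match l with nil => 0 | x :: l' => vnorm X x + lsum l' end.

Lemma lsum_nonneg {X : Banach} (l : list X) : 0 <= lsum l.
Proof. induction l; simpl. lra. pose proof (vnorm_nonneg a). lra. Qed.

Lemma lsum_in {X : Banach} (l : list X) x : In x l -> vnorm X x <= lsum l.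
Proof.
  induction l; simpl. tauto. intros [->|H].
  - pose proof (lsum_nonneg l). lra.
  - specialize (IHl H). pose proof (vnorm_nonneg a). lra.
Qed.


Section PartI.
Variable X : Banach.
Variable g : dual X -> ER.
Variable T : dual X -> X -> Prop.
Variable a0 : dual X.
Hypothesis Hconv : convex g.
Hypothesis Hlsc : weakstar_lsc g.
Hypothesis HT : forall a x, T a x -> subdiff g a x.
Hypothesis HD : DT T a0.

Notation XS := (XS X).

Lemma convXS : convY XS g.
Proof.
  intros p q t Ht. apply Hconv. lra. intro x. simpl. ring.
Qed.

Lemma lscXS : lscY XS g.
Proof.
  intros a c Hac. destruct (Hlsc c a Hac) as [l [eps [He H]]].
  exists (eps / (lsum l + 1)). split. apply Rdiv_lt_0_compat; [lra| pose proof (lsum_nonneg l); lra].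
  intros b Hb. apply H. intros x Hx.
  pose proof (dnorm_bound X (dadd X b (dopp X a)) x). simpl in H0.
  replace (b x + -1 * a x) with (b x - a x) in H0 by ring.
  pose proof (lsum_in l x Hx). pose proof (lsum_nonneg l). pose proof (vnorm_nonneg x).
  change (vdist (X := XS) b a) with (dnorm X (dadd X b (dopp X a))) in Hb.
  pose proof (dnorm_nonneg X (dadd X b (dopp X a))).
  eapply Rle_lt_trans. apply H0.
  apply Rle_lt_trans with (eps / (lsum l + 1) * vnorm X x).
  apply Rmult_le_compat_r; lra.
  apply Rle_lt_trans with (eps / (lsum l + 1) * lsum l). apply Rmult_le_compat_l; [|lra].
  left. apply Rdiv_lt_0_compat; lra.
  apply (Rmult_lt_reg_r (lsum l + 1)). lra.
  replace (eps / (lsum l + 1) * lsum l * (lsum l + 1)) with (eps * lsum l) by (field; lra). nra.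
Qed.

Definition SgI (b : XS) (s : dual XS) := exists x, T b x /\ s = ev X x.

Lemma HSI : forall y s, SgI y s -> subg XS g y s.
Proof.
  intros y s [x [Hx ->]]. destruct (HT _ _ Hx) as [Hd Hs]. split; auto.
Qed.

Lemma intXS_iff a : intY XS g a <-> dual_interior (dom g) a.
Proof.
  split.
  - intros [r [Hr H]]. exists r. split; auto. intros b Hb. apply H. apply dual_dist_lt_iff; auto.
  - intros [r [Hr H]]. exists r. split; auto. intros b Hb. apply H. apply dual_dist_lt_iff; auto.
Qed.

Lemma denseI : dual_dense_in (DT T) (dual_interior (dom g)) ->
  forall y, intY XS g y -> forall eta, 0 < eta -> exists y' s', SgI y' s' /\ vdist (X := XS) y' y < eta.
Proof.
  intros Hd y Hy eta He. apply intXS_iff in Hy. destruct (Hd y Hy eta He) as [b [[x Hx] Hb]].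
  exists b, (ev X x). split. exists x; auto. apply dual_dist_lt_iff; auto.
Qed.

Lemma partI_key : (exists a, dual_interior (dom g) a) ->
   dual_dense_in (DT T) (dual_interior (dom g)) ->
   forall a, dom g a -> forall c, ~ ER_le (ER_minus (g a) (g a0)) (Fin c) ->
   exists r, hset T a0 a r /\ c < r.
Proof.
  intros [c1 Hc1] Hdense a Ha c Hc.
  apply intXS_iff in Hc1.
  pose proof (denseI Hdense) as Hden.
  destruct HD as [x0 Hx0].
  assert (Ha0 : dom g a0) by (apply (HT _ _ Hx0)).
  set (u := fr (g a0)). set (fa := fr (g a)).
  assert (Hga0 : g a0 = Fin u) by (unfold u, dom in *; destruct (g a0); simpl; congruence).
  assert (Hga : g a = Fin fa) by (unfold fa, dom in *; destruct (g a); simpl; congruence).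
  rewrite Hga, Hga0 in Hc. simpl in Hc.
  set (gam := (fa - u - c) / 20).
  assert (Hgam : 0 < gam) by (unfold gam; lra).
  pose proof (intY_dom XS g c1 Hc1) as Hdc1.
  destruct (seg_cont XS g convXS lscXS a c1 gam Ha Hdc1 Hgam) as [t0 [Ht0 Hst]].
  set (t := t0 / 2).
  set (q1 := seg XS a c1 t). set (q2 := seg XS a c1 (2 * t)).
  destruct (Hst t ltac:(unfold t; lra)) as [_ Hq1v].
  destruct (Hst (2*t) ltac:(unfold t; lra)) as [_ Hq2v].
  fold q1 in Hq1v. fold q2 in Hq2v. change (Fv XS g a) with fa in Hq1v, Hq2v.
  assert (Hq1i : intY XS g q1) by (apply (int_seg XS g convXS); auto; unfold t; lra).
  assert (Hq2i : intY XS g q2) by (apply (int_seg XS g convXS); auto; unfold t; lra).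
  destruct (seg_cont XS g convXS lscXS a0 c1 gam Ha0 Hdc1 Hgam) as [s0 [Hs0 Hss]].
  set (A0 := Rabs (c1 x0 - a0 x0) + 1).
  assert (HA0 : 0 < A0) by (unfold A0; pose proof (Rabs_pos (c1 x0 - a0 x0)); lra).
  set (tau := Rmin s0 (gam / A0)).
  assert (Htau : 0 < tau) by (apply Rmin_glb_lt; [lra| apply Rdiv_lt_0_compat; lra]).
  assert (Htau1 : tau <= s0) by apply Rmin_l.
  assert (Htau2 : tau <= gam / A0) by apply Rmin_r.
  set (p1 := seg XS a0 c1 tau).
  destruct (Hss tau ltac:(lra)) as [_ Hp1v]. fold p1 in Hp1v. change (Fv XS g a0) with u in Hp1v.
  assert (Hp1i : intY XS g p1) by (apply (int_seg XS g convXS); auto; lra).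
  assert (Hp1x : Rabs (p1 x0 - a0 x0) < gam).
  { unfold p1, seg. simpl. replace ((1 - tau) * a0 x0 + tau * c1 x0 - a0 x0) with (tau * (c1 x0 - a0 x0)) by ring.
    rewrite Rabs_mult, Rabs_right by lra.
    apply Rle_lt_trans with (gam / A0 * Rabs (c1 x0 - a0 x0)).
    apply Rmult_le_compat_r. apply Rabs_pos. auto.
    apply (Rmult_lt_reg_r A0). lra.
    replace (gam / A0 * Rabs (c1 x0 - a0 x0) * A0) with (gam * Rabs (c1 x0 - a0 x0)) by (field; lra).
    unfold A0. nra. }
  destruct (int_cont XS g convXS lscXS p1 Hp1i gam Hgam) as [d1 [Hd1 Hc1p]].
  destruct (int_near XS g p1 Hp1i) as [rho1 [Hrho1 Hnear]].
  set (eta1 := Rmin (Rmin d1 rho1) (gam / (vnorm X x0 + 1))).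
  assert (Heta1 : 0 < eta1).
  { unfold eta1. apply Rmin_glb_lt. apply Rmin_glb_lt; lra. apply Rdiv_lt_0_compat. lra. pose proof (vnorm_nonneg x0); lra. }
  destruct (Hden p1 Hp1i eta1 Heta1) as [y1 [s1 [Hs1 Hy1]]].
  assert (Hy1d : vdist (X := XS) y1 p1 < d1) by (eapply Rlt_le_trans; [exact Hy1| unfold eta1; eapply Rle_trans; [apply Rmin_l| apply Rmin_l]]).
  assert (Hy1r : vdist (X := XS) y1 p1 < rho1) by (eapply Rlt_le_trans; [exact Hy1| unfold eta1; eapply Rle_trans; [apply Rmin_l| apply Rmin_r]]).
  assert (Hy1g : vdist (X := XS) y1 p1 < gam / (vnorm X x0 + 1)) by (eapply Rlt_le_trans; [exact Hy1| apply Rmin_r]).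
  destruct (Hc1p y1 Hy1d) as [Hy1dom Hy1v].
  assert (Hy1i : intY XS g y1) by auto.
  assert (Hy1x : Rabs (y1 x0 - p1 x0) < gam).
  { pose proof (dnorm_bound X (dadd X y1 (dopp X p1)) x0).
    change (dfun (dadd X y1 (dopp X p1)) x0) with (y1 x0 + -1 * p1 x0) in H.
    replace (y1 x0 + -1 * p1 x0) with (y1 x0 - p1 x0) in H by ring.
    change (vdist (X := XS) y1 p1) with (dnorm X (dadd X y1 (dopp X p1))) in Hy1g.
    pose proof (vnorm_nonneg x0). pose proof (dnorm_nonneg X (dadd X y1 (dopp X p1))).
    eapply Rle_lt_trans. apply H.
    apply Rle_lt_trans with (gam / (vnorm X x0 + 1) * vnorm X x0). apply Rmult_le_compat_r; lra.
    apply (Rmult_lt_reg_r (vnorm X x0 + 1)). lra.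
    replace (gam / (vnorm X x0 + 1) * vnorm X x0 * (vnorm X x0 + 1)) with (gam * vnorm X x0) by (field; lra). nra. }
  set (r1 := 0 + y1 x0 - a0 x0).
  assert (Hr1 : hset T a0 y1 r1) by (apply chainP_hset; apply chainP0; auto).
  assert (Hr1b : Fv XS g y1 - u - 4 * gam < r1).
  { unfold r1. apply Rabs_def2 in Hp1x. apply Rabs_def2 in Hy1x. apply Rabs_def2 in Hy1v. apply Rabs_def2 in Hp1v. lra. }
  destruct (int_cont XS g convXS lscXS q1 Hq1i gam Hgam) as [d2 [Hd2 Hc2]].
  destruct (int_cont XS g convXS lscXS q2 Hq2i gam Hgam) as [d3 [Hd3 Hc3]].
  set (delta := Rmin d2 (d3 / 2)).
  assert (Hdelta : 0 < delta) by (apply Rmin_glb_lt; lra).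
  destruct (core XS g convXS lscXS SgI HSI Hden y1 s1 q1 gam delta Hy1i Hq1i Hs1 Hgam Hdelta)
    as [N [ys [ss [Hys0 [Hss0 [HSk [HyN HE]]]]]]].
  assert (Hchain : forall k, (k <= N)%nat ->
     hset T a0 (ys k) (r1 + sumR (fun i => ss i (vadd XS (ys (S i)) (vopp XS (ys i)))) k)).
  { induction k; intros Hk. simpl. rewrite Hys0. replace (r1 + 0) with r1 by ring. auto.
    destruct (HSk k ltac:(lia)) as [xk [HTk Hssk]].
    pose proof (hset_step X T a0 (ys k) _ xk (ys (S k)) (IHk ltac:(lia)) HTk).
    cbn [sumR]. rewrite Hssk.
    match goal with |- hset _ _ _ ?v => replace v with
      (r1 + sumR (fun i => ss i (vadd XS (ys (S i)) (vopp XS (ys i)))) k + ys (S k) xk - ys k xk) end.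
    exact H. simpl. ring. }
  pose proof (sandwich XS g N ys ss (fun k Hk => HSI _ _ (HSk k Hk))) as [Hsw _].
  rewrite Hys0 in Hsw.
  destruct (HSk N (le_n N)) as [xN [HTN HssN]].
  pose proof (hset_step X T a0 (ys N) _ xN a (Hchain N (le_n N)) HTN) as Hfinal.
  eexists. split. exact Hfinal.
  set (z := vadd XS (vscal XS 2 (ys N)) (vopp XS a)).
  assert (Hzq2 : vdist (X := XS) z q2 < d3).
  { assert (Eq2 : q2 = vadd XS (vscal XS 2 q1) (vopp XS a)).
    { apply dual_ext. intro x. unfold q2, q1, seg. simpl. ring. }
    rewrite Eq2. unfold z. rewrite vdist_scal_trans, Rabs_right by lra.
    assert (vdist (X := XS) (ys N) q1 < d3 / 2) by (eapply Rlt_le_trans; [exact HyN| apply Rmin_r]). lra. }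
  destruct (Hc3 z Hzq2) as [Hzd Hzv].
  assert (HyNd : vdist (X := XS) (ys N) q1 < d2) by (eapply Rlt_le_trans; [exact HyN| apply Rmin_l]).
  destruct (Hc2 (ys N) HyNd) as [HyNdom HyNv].
  pose proof (subg_ineq XS g (ys N) (ss N) z (HSI _ _ (HSk N (le_n N))) Hzd) as Hsub.
  rewrite HssN in Hsub.
  change (dfun (ev X xN) z) with (dfun z xN) in Hsub.
  change (dfun (ev X xN) (ys N)) with (dfun (ys N) xN) in Hsub.
  assert (Ez : dfun z xN = 2 * ys N xN - a xN) by (unfold z; simpl; ring). rewrite Ez in Hsub.
  apply Rabs_def2 in Hq1v. apply Rabs_def2 in Hq2v. apply Rabs_def2 in Hzv. apply Rabs_def2 in HyNv.
  unfold gam in *. lra.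
Qed.

Lemma partI : (exists a, dual_interior (dom g) a) ->
   dual_dense_in (DT T) (dual_interior (dom g)) ->
   forall a, dom g a -> ER_sup (hset T a0 a) (ER_minus (g a) (g a0)).
Proof.
  intros Hi Hd a Ha. apply ER_sup_intro.
  - intros r Hr. apply (hset_upper X T a0 g HT a r Hr). destruct HD as [x0 Hx0]. apply (HT _ _ Hx0).
  - apply partI_key; auto.
Qed.

End PartI.

Lemma ER_le_PInf u : ER_le u PInf.
Proof. destruct u; simpl; auto. Qed.

Section Phi.
Variable X : Banach.
Variable g : dual X -> ER.
Hypothesis Hprop : proper g.

Definition phiset (x : X) (v : R) := exists b r, g b = Fin r /\ v = b x - r.

Lemma phiset_ne x : exists v, phiset x v.
Proof.
  destruct Hprop as [b Hb]. unfold dom in Hb. destruct (g b) as [r|] eqn:E; [|congruence].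
  exists (b x - r). exists b, r. auto.
Qed.

Definition phi (x : X) : ER :=
  match excluded_middle_informative (bound (phiset x)) with
  | left Hb => Fin (proj1_sig (completeness _ Hb (phiset_ne x)))
  | right _ => PInf
  end.

Lemma phi_ub x v : phi x = Fin v -> forall b r, g b = Fin r -> b x - r <= v.
Proof.
  unfold phi. destruct (excluded_middle_informative _) as [Hbd|Hbd]; [|congruence].
  destruct (completeness _ _ _) as [l [Hl1 Hl2]]. simpl. intros [= <-] b0 r Hr.
  apply Hl1. exists b0, r. auto.
Qed.

Lemma phi_approx x v : phi x = Fin v -> forall eps, 0 < eps ->
  exists b r, g b = Fin r /\ v - eps < b x - r.
Proof.
  unfold phi. destruct (excluded_middle_informative _) as [Hbd|Hbd]; [|congruence].
  destruct (completeness _ _ _) as [l [Hl1 Hl2]]. simpl. intros [= <-] eps He.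
  apply NNPP. intro Hn.
  assert (l <= l - eps).
  { apply Hl2. intros w [b [r [Hr ->]]]. destruct (Rle_or_lt (b x - r) (l - eps)); auto.
    exfalso. apply Hn. exists b, r. split; auto; lra. }
  lra.
Qed.

Lemma phi_le x M : (forall b r, g b = Fin r -> b x - r <= M) -> exists v, phi x = Fin v /\ v <= M.
Proof.
  intro H. unfold phi. destruct (excluded_middle_informative _) as [Hb|Hb].
  - destruct (completeness _ _ _) as [l [Hl1 Hl2]]. simpl. exists l. split; auto.
    apply Hl2. intros w [b [r [Hr ->]]]. auto.
  - exfalso. apply Hb. exists M. intros w [b [r [Hr ->]]]. auto.
Qed.

Lemma phi_unbdd x : phi x = PInf -> forall M, exists b r, g b = Fin r /\ M < b x - r.
Proof.
  intros H M. apply NNPP. intro Hn.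
  destruct (phi_le x M) as [v [Hv _]]. intros b r Hr. destruct (Rle_or_lt (b x - r) M); auto.
  exfalso. apply Hn. eauto. congruence.
Qed.

Lemma phi_dom_iff x : domY X phi x <-> dom_conj_X g x.
Proof.
  split.
  - intro H. unfold domY in H. destruct (phi x) as [v|] eqn:E; [|congruence].
    exists v. apply phi_ub; auto.
  - intros [M HM]. destruct (phi_le x M HM) as [v [Hv _]]. unfold domY. congruence.
Qed.

Lemma phi_conv : convY X phi.
Proof.
  intros p q t Ht. destruct (phi p) as [vp|] eqn:Ep; [|destruct (phi q); apply ER_le_PInf].
  destruct (phi q) as [vq|] eqn:Eq; [|apply ER_le_PInf].
  destruct (phi_le (seg X p q t) ((1 - t) * vp + (1 - (1 - t)) * vq)) as [v [Hv Hle]].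
  { intros b r Hr. rewrite dfun_seg.
    pose proof (phi_ub p vp Ep b r Hr). pose proof (phi_ub q vq Eq b r Hr). nra. }
  rewrite Hv. simpl. auto.
Qed.

Lemma phi_big x c : ~ ER_le (phi x) (Fin c) -> exists b r, g b = Fin r /\ c < b x - r.
Proof.
  intro H. destruct (phi x) as [v|] eqn:E.
  - simpl in H. destruct (phi_approx x v E (v - c) ltac:(lra)) as [b [r [Hr Hv]]].
    exists b, r. split; auto. lra.
  - apply phi_unbdd; auto.
Qed.

Lemma phi_not_le x b r c : g b = Fin r -> c < b x - r -> ~ ER_le (phi x) (Fin c).
Proof.
  intros Hr Hc Hle. destruct (phi x) as [v|] eqn:E; simpl in Hle; auto.
  pose proof (phi_ub x v E b r Hr). lra.
Qed.

Lemma phi_lsc : lscY X phi.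
Proof.
  intros y c Hc. destruct (phi_big y c Hc) as [b [r [Hr Hb]]].
  destruct (dfun_lip X b) as [K [HK HKb]].
  exists ((b y - r - c) / K). split. apply Rdiv_lt_0_compat; lra.
  intros z Hz. apply (phi_not_le z b r c Hr).
  specialize (HKb z y). apply Rabs_le_inv in HKb.
  assert (K * vdist z y < b y - r - c).
  { apply (Rmult_lt_reg_l (/K)). apply Rinv_0_lt_compat; lra.
    rewrite <- Rmult_assoc, Rinv_l by lra. rewrite Rmult_1_l. rewrite Rmult_comm. exact Hz. }
  lra.
Qed.


Lemma phi_at_subdiff b x : subdiff g b x -> exists r, g b = Fin r /\ phi x = Fin (b x - r).
Proof.
  intros [Hd Hs]. unfold dom in Hd. destruct (g b) as [r|] eqn:Er; [|congruence].
  exists r. split; auto.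
  destruct (phi_le x (b x - r)) as [v [Hv Hle]].
  { intros b' r' Hr'. specialize (Hs b'). rewrite Hr' in Hs. simpl in Hs. lra. }
  rewrite Hv. f_equal. pose proof (phi_ub x v Hv b r Er). lra.
Qed.

Lemma phi_subg b x : subdiff g b x -> subg X phi x b.
Proof.
  intro H. destruct (phi_at_subdiff b x H) as [r [Hr Hx]].
  split. unfold domY. congruence.
  intro z. rewrite Hx. destruct (phi z) as [w|] eqn:Ez; simpl; auto.
  pose proof (phi_ub z w Ez b r Hr). lra.
Qed.

Lemma phi_int_iff x : intY X phi x <-> X_interior (dom_conj_X g) x.
Proof.
  split.
  - intros [r [Hr H]]. exists r. split; auto. intros y Hy. apply phi_dom_iff. auto.
  - intros [r [Hr H]]. exists r. split; auto. intros y Hy. apply phi_dom_iff. auto.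
Qed.

End Phi.

Section PartII.
Variable X : Banach.
Variable g : dual X -> ER.
Variable T : dual X -> X -> Prop.
Variable a0 : dual X.
Hypothesis Hprop : proper g.
Hypothesis HT : forall a x, T a x -> subdiff g a x.
Hypothesis HD : DT T a0.
Hypothesis FM : forall a c, ~ ER_le (g a) (Fin c) ->
  exists xh beta, (forall b r, g b = Fin r -> b xh - r <= beta) /\ c < a xh - beta.

Notation phi := (phi X g Hprop).
Notation va := (vadd X). Notation vs := (vscal X). Notation vo := (vopp X).

Definition SgII (y : X) (s : dual X) := T s y.

Lemma HSII : forall y s, SgII y s -> subg X phi y s.
Proof. intros y s H. apply phi_subg. apply HT; auto. Qed.

Lemma partII_key : (exists x, X_interior (dom_conj_X g) x) ->
   X_dense_in (ImT T) (X_interior (dom_conj_X g)) ->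
   forall a c, ~ ER_le (ER_minus (g a) (g a0)) (Fin c) -> exists r, hset T a0 a r /\ c < r.
Proof.
  intros [x1 Hx1] Hdense a c Hc.
  assert (Hden : forall y, intY X phi y -> forall eta, 0 < eta ->
            exists y' s', SgII y' s' /\ vdist y' y < eta).
  { intros y Hy eta He. apply (phi_int_iff X g Hprop) in Hy. destruct (Hdense y Hy eta He) as [y' [[s' Hs'] Hy']].
    exists y', s'. split; auto. }
  pose proof (phi_conv X g Hprop) as Fc. pose proof (phi_lsc X g Hprop) as Fl.
  destruct HD as [x0 Hx0].
  destruct (phi_at_subdiff X g Hprop a0 x0 (HT _ _ Hx0)) as [u [Hu Hphix0]].
  assert (Hc' : ~ ER_le (g a) (Fin (c + u))).
  { rewrite Hu in Hc. destruct (g a); simpl in *; auto. lra. }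
  destruct (FM a (c + u) Hc') as [xh [beta [Hb Hbeta]]].
  set (gam := (a xh - beta - (c + u)) / 20).
  assert (Hgam : 0 < gam) by (unfold gam; lra).
  destruct (phi_le X g Hprop xh beta Hb) as [vh [Hvh Hvhb]].
  assert (Hdxh : domY X phi xh) by (unfold domY; congruence).
  assert (HFxh : Fv X phi xh = vh) by (unfold Fv; rewrite Hvh; reflexivity).
  apply (phi_int_iff X g Hprop) in Hx1.
  pose proof (intY_dom X phi x1 Hx1) as Hdx1.
  set (B := Rabs (a x1 - a xh + beta - Fv X phi x1) + 1).
  assert (HB : 0 < B) by (unfold B; pose proof (Rabs_pos (a x1 - a xh + beta - Fv X phi x1)); lra).
  set (t := Rmin 1 (gam / B)).
  assert (Ht : 0 < t <= 1).
  { split. apply Rmin_glb_lt. lra. apply Rdiv_lt_0_compat; lra. apply Rmin_l. }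
  assert (HtB : t * B <= gam).
  { apply Rle_trans with (gam / B * B). apply Rmult_le_compat_r. lra. apply Rmin_r.
    right. field. lra. }
  set (q := seg X xh x1 t).
  assert (Hqi : intY X phi q) by (apply (int_seg X phi Fc); auto).
  assert (Hqv : a xh - beta - gam <= a q - Fv X phi q).
  { destruct (conv_real X phi Fc xh x1 t Hdxh Hdx1 ltac:(lra)) as [_ Hcv].
    fold q in Hcv. unfold q. rewrite dfun_seg. fold q.
    rewrite HFxh in Hcv.
    pose proof (Rle_abs (a x1 - a xh + beta - Fv X phi x1)).
    pose proof (Rle_abs (-(a x1 - a xh + beta - Fv X phi x1))). rewrite Rabs_Ropp in H0.
    assert ((1 - t) * vh <= (1 - t) * beta) by (apply Rmult_le_compat_l; lra).
    assert (t * (- (a x1 - a xh + beta - Fv X phi x1)) <= t * B) by (apply Rmult_le_compat_l; unfold B; lra).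
    nra. }
  assert (Hx0sub := HSII x0 a0 Hx0).
  assert (Hdx0 : domY X phi x0) by apply Hx0sub.
  assert (HFx0 : Fv X phi x0 = a0 x0 - u) by (unfold Fv; rewrite Hphix0; reflexivity).
  destruct (seg_cont X phi Fc Fl x0 q gam Hdx0 (intY_dom X phi q Hqi) Hgam) as [tau0 [Htau0 Hst]].
  set (tau := tau0 / 2).
  set (p1 := seg X x0 q tau). set (p2 := seg X x0 q (2 * tau)).
  destruct (Hst tau ltac:(unfold tau; lra)) as [_ Hp1v]. fold p1 in Hp1v.
  destruct (Hst (2 * tau) ltac:(unfold tau; lra)) as [_ Hp2v]. fold p2 in Hp2v.
  assert (Hp1i : intY X phi p1) by (apply (int_seg X phi Fc); auto; unfold tau; lra).
  assert (Hp2i : intY X phi p2) by (apply (int_seg X phi Fc); auto; unfold tau; lra).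
  destruct (int_cont X phi Fc Fl p1 Hp1i gam Hgam) as [d1 [Hd1 Hc1]].
  destruct (int_cont X phi Fc Fl p2 Hp2i gam Hgam) as [d2 [Hd2 Hc2]].
  destruct (int_near X phi p1 Hp1i) as [rho1 [Hrho1 Hnear]].
  set (eta1 := Rmin (Rmin d1 (d2 / 2)) rho1).
  assert (Heta1 : 0 < eta1) by (unfold eta1; repeat apply Rmin_glb_lt; lra).
  destruct (Hden p1 Hp1i eta1 Heta1) as [y1 [b1 [Hs1 Hy1]]].
  assert (Hy1a : vdist y1 p1 < d1) by (eapply Rlt_le_trans; [exact Hy1| unfold eta1; eapply Rle_trans; [apply Rmin_l|apply Rmin_l]]).
  assert (Hy1b : vdist y1 p1 < d2 / 2) by (eapply Rlt_le_trans; [exact Hy1| unfold eta1; eapply Rle_trans; [apply Rmin_l|apply Rmin_r]]).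
  assert (Hy1c : vdist y1 p1 < rho1) by (eapply Rlt_le_trans; [exact Hy1| unfold eta1; apply Rmin_r]).
  destruct (Hc1 y1 Hy1a) as [Hdy1 Hy1v].
  assert (Hy1i : intY X phi y1) by auto.
  set (z1 := va (vs 2 y1) (vo x0)).
  assert (Hz1 : vdist z1 p2 < d2).
  { assert (Ep2 : p2 = va (vs 2 p1) (vo x0)).
    { unfold p2, p1, seg. vring4 x0 q (vzero X) (vzero X); ring. }
    rewrite Ep2. unfold z1. rewrite vdist_scal_trans, Rabs_right by lra. lra. }
  destruct (Hc2 z1 Hz1) as [Hdz1 Hz1v].
  pose proof (subg_ineq X phi y1 b1 z1 (HSII _ _ Hs1) Hdz1) as Hsub1.
  unfold z1 in Hsub1. rewrite dfun_add, dfun_scal, dfun_opp in Hsub1. fold z1 in Hsub1.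
  set (C1 := 0 + b1 x0 - a0 x0).
  assert (HC1 : chainP X T a0 b1 y1 C1) by (apply chainP_ext; [apply chainP0|]; auto).
  destruct (int_cont X phi Fc Fl q Hqi gam Hgam) as [d3 [Hd3 Hc3]].
  destruct (dfun_lip X a) as [Ka [HKa HKab]].
  set (delta := Rmin d3 (gam / Ka)).
  assert (Hdelta : 0 < delta) by (apply Rmin_glb_lt; [lra| apply Rdiv_lt_0_compat; lra]).
  destruct (core X phi Fc Fl SgII HSII Hden y1 b1 q gam delta Hy1i Hqi Hs1 Hgam Hdelta)
    as [N [ys [ss [Hys0 [Hss0 [HSk [HyN HE]]]]]]].
  set (Ck := fun k => C1 + sumR (fun i => ss (S i) (ys i) - ss i (ys i)) k).
  assert (Hchain : forall k, (k <= N)%nat -> chainP X T a0 (ss k) (ys k) (Ck k)).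
  { induction k; intros Hk. unfold Ck. simpl. rewrite Hys0, Hss0. replace (C1 + 0) with C1 by ring. auto.
    pose proof (chainP_ext X T a0 _ _ _ (ss (S k)) (ys (S k)) (IHk ltac:(lia)) (HSk (S k) Hk)).
    unfold Ck in *. cbn [sumR].
    replace (C1 + (sumR (fun i : nat => ss (S i) (ys i) - ss i (ys i)) k + (ss (S k) (ys k) - ss k (ys k))))
      with (C1 + sumR (fun i : nat => ss (S i) (ys i) - ss i (ys i)) k + ss (S k) (ys k) - ss k (ys k)) by ring.
    exact H. }
  assert (HW : forall k, ss k (ys k) - Ck k = b1 y1 - C1 + sumR (fun i => ss (S i) (va (ys (S i)) (vo (ys i)))) k).
  { induction k. unfold Ck. simpl. rewrite Hys0, Hss0. ring.
    unfold Ck in *. cbn [sumR]. rewrite dfun_sub. lra. }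
  pose proof (sandwich X phi N ys ss (fun k Hk => HSII _ _ (HSk k Hk))) as [_ Hsw].
  rewrite Hys0 in Hsw.
  pose proof (chainP_hset X T a0 _ _ _ a (Hchain N (le_n N))) as Hfin.
  eexists. split. exact Hfin.
  assert (HyNd : vdist (ys N) q < d3) by (eapply Rlt_le_trans; [exact HyN| apply Rmin_l]).
  assert (HyNg : vdist (ys N) q < gam / Ka) by (eapply Rlt_le_trans; [exact HyN| apply Rmin_r]).
  destruct (Hc3 (ys N) HyNd) as [HdyN HyNv].
  assert (HaN : Rabs (a (ys N) - a q) < gam).
  { eapply Rle_lt_trans. apply HKab. apply (Rmult_lt_reg_l (/Ka)). apply Rinv_0_lt_compat; lra.
    rewrite <- Rmult_assoc, Rinv_l by lra. rewrite Rmult_1_l. rewrite Rmult_comm. exact HyNg. }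
  specialize (HW N).
  apply Rabs_def2 in Hp1v. apply Rabs_def2 in Hp2v. apply Rabs_def2 in Hy1v. apply Rabs_def2 in Hz1v.
  apply Rabs_def2 in HyNv. apply Rabs_def2 in HaN.
  unfold C1 in HW. rewrite HFx0 in Hp1v, Hp2v.
  unfold gam in *. lra.
Qed.

End PartII.

Definition vec := nat -> R.
Definition dot (l u : vec) (k : nat) := sumR (fun j => l j * u j) k.

Lemma dot_add l u v k : dot l (fun j => u j + v j) k = dot l u k + dot l v k.
Proof. unfold dot. induction k; simpl. ring. rewrite IHk. ring. Qed.

Lemma dot_scal l u c k : dot l (fun j => c * u j) k = c * dot l u k.
Proof. unfold dot. induction k; simpl. ring. rewrite IHk. ring. Qed.

Lemma dot_ext l l' u u' k : (forall j, (j < k)%nat -> l j * u j = l' j * u' j) -> dot l u k = dot l' u' k.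
Proof. intros H. unfold dot. apply sumR_ext. auto. Qed.

Section HB.
Variable p : vec -> R.
Hypothesis psub : forall u v, p (fun j => u j + v j) <= p u + p v.
Hypothesis phom : forall t u, 0 < t -> p (fun j => t * u j) = t * p u.
Hypothesis ppos : forall u, 0 <= p u.
Variable w : vec.
Hypothesis pw : 1 <= p w.

Definition supp (k : nat) (u : vec) := forall j, (k <= j)%nat -> u j = 0.

Lemma HB k : exists lam : vec, forall t u, supp k u ->
  t + dot lam u k <= p (fun j => t * w j + u j).
Proof.
  induction k as [|k [lam IH]].
  - exists (fun _ => 0). intros t u Hu. unfold dot. simpl.
    replace (fun j => t * w j + u j) with (fun j => t * w j)
      by (apply functional_extensionality; intro j; rewrite (Hu j) by lia; ring).
    destruct (Rlt_or_le 0 t) as [Ht|Ht]. rewrite phom by auto. nra. pose proof (ppos (fun j => t * w j)). lra.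
  - set (e := fun j => if Nat.eqb j k then 1 else 0).
    set (Lo := fun a => exists t1 u1, supp k u1 /\
                 a = t1 + dot lam u1 k - p (fun j => t1 * w j + (u1 j - e j))).
    assert (Key : forall t1 u1 t2 u2, supp k u1 -> supp k u2 ->
       t1 + dot lam u1 k - p (fun j => t1 * w j + (u1 j - e j)) <=
       p (fun j => t2 * w j + (u2 j + e j)) - t2 - dot lam u2 k).
    { intros t1 u1 t2 u2 H1 H2.
      assert (HS : supp k (fun j => u1 j + u2 j)) by (intros j Hj; rewrite H1, H2 by auto; ring).
      pose proof (IH (t1 + t2) _ HS). rewrite dot_add in H.
      pose proof (psub (fun j => t1 * w j + (u1 j - e j)) (fun j => t2 * w j + (u2 j + e j))).
      cbv beta in H0.
      replace (fun j => t1 * w j + (u1 j - e j) + (t2 * w j + (u2 j + e j))) with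
        (fun j => (t1 + t2) * w j + (u1 j + u2 j)) in H0
        by (apply functional_extensionality; intro j; ring).
      cbv beta in *. lra. }
    assert (Hsupp0 : supp k (fun _ => 0)) by (intros j _; auto).
    destruct (completeness Lo) as [al [Hub Hlub]].
    { exists (p (fun j => 0 * w j + (0 + e j)) - 0 - dot lam (fun _ => 0) k).
      intros a [t1 [u1 [Hu1 ->]]]. apply Key; auto. }
    { eexists. exists 0, (fun _ => 0). split; auto. }
    assert (Hlo : forall t1 u1, supp k u1 ->
       t1 + dot lam u1 k - p (fun j => t1 * w j + (u1 j - e j)) <= al).
    { intros t1 u1 Hu1. apply Hub. exists t1, u1. auto. }
    assert (Hup : forall t2 u2, supp k u2 ->
       al <= p (fun j => t2 * w j + (u2 j + e j)) - t2 - dot lam u2 k).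
    { intros t2 u2 Hu2. apply Hlub. intros a [t1 [u1 [Hu1 ->]]]. apply Key; auto. }
    exists (fun j => if Nat.eqb j k then al else lam j).
    intros t u Hu.
    set (u' := fun j => if Nat.eqb j k then 0 else u j).
    assert (Hu' : supp k u').
    { intros j Hj. unfold u'. destruct (Nat.eqb j k) eqn:E. auto. apply Hu.
      apply Nat.eqb_neq in E. lia. }
    assert (Hdot : dot (fun j => if Nat.eqb j k then al else lam j) u (S k) = dot lam u' k + al * u k).
    { unfold dot at 1. cbn [sumR]. rewrite Nat.eqb_refl. f_equal.
      apply dot_ext. intros j Hj. unfold u'. destruct (Nat.eqb j k) eqn:E; auto.
      apply Nat.eqb_eq in E. lia. }
    rewrite Hdot.
    assert (Hue : forall s, u k = s -> (fun j => t * w j + u j) = (fun j => t * w j + (u' j + s * e j))).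
    { intros s Hs. apply functional_extensionality. intro j. unfold u', e.
      destruct (Nat.eqb j k) eqn:E. apply Nat.eqb_eq in E. subst. ring. ring. }
    destruct (Rtotal_order (u k) 0) as [Hneg|[Hz|Hpos]].
    + set (sg := - u k).
      assert (Hsg : 0 < sg) by (unfold sg; lra).
      assert (Hs1 : supp k (fun j => u' j / sg)) by (intros j Hj; rewrite Hu' by auto; unfold Rdiv; ring).
      pose proof (Hlo (t / sg) _ Hs1) as H. cbv beta in H.
      replace (fun j => t / sg * w j + (u' j / sg - e j)) with
        (fun j => / sg * (t * w j + (u' j + u k * e j))) in H
        by (apply functional_extensionality; intro j; unfold sg; field; lra).
      pose proof (phom (/ sg) (fun j => t * w j + (u' j + u k * e j)) ltac:(apply Rinv_0_lt_compat; lra)) as Hph.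
      cbv beta in Hph. rewrite Hph in H.
      replace (fun j => u' j / sg) with (fun j => / sg * u' j) in H
        by (apply functional_extensionality; intro j; unfold Rdiv; ring).
      rewrite dot_scal in H. rewrite (Hue (u k) eq_refl).
      apply (Rmult_le_compat_l sg) in H; [|lra].
      replace (sg * (t / sg + / sg * dot lam u' k - / sg * p (fun j => t * w j + (u' j + u k * e j))))
        with (t + dot lam u' k - p (fun j => t * w j + (u' j + u k * e j))) in H by (field; lra).
      unfold sg in H. lra.
    + rewrite (Hue 0 Hz). rewrite Hz.
      replace (fun j => t * w j + (u' j + 0 * e j)) with (fun j => t * w j + u' j)
        by (apply functional_extensionality; intro j; ring).
      pose proof (IH t u' Hu'). lra.
    + assert (Hs1 : supp k (fun j => u' j / u k)) by (intros j Hj; rewrite Hu' by auto; unfold Rdiv; ring).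
      pose proof (Hup (t / u k) _ Hs1) as H. cbv beta in H.
      replace (fun j => t / u k * w j + (u' j / u k + e j)) with
        (fun j => / u k * (t * w j + (u' j + u k * e j))) in H
        by (apply functional_extensionality; intro j; field; lra).
      pose proof (phom (/ u k) (fun j => t * w j + (u' j + u k * e j)) ltac:(apply Rinv_0_lt_compat; lra)) as Hph.
      cbv beta in Hph. rewrite Hph in H.
      replace (fun j => u' j / u k) with (fun j => / u k * u' j) in H
        by (apply functional_extensionality; intro j; unfold Rdiv; ring).
      rewrite dot_scal in H. rewrite (Hue (u k) eq_refl).
      apply (Rmult_le_compat_l (u k)) in H; [|lra].
      replace (u k * (/ u k * p (fun j => t * w j + (u' j + u k * e j)) - t / u k - / u k * dot lam u' k))
        with (p (fun j => t * w j + (u' j + u k * e j)) - t - dot lam u' k) in H by (field; lra).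
      lra.
Qed.

End HB.

Lemma glb_pos (S : R -> Prop) : (exists t, S t) -> (forall t, S t -> 0 < t) ->
  { m | (forall t, S t -> m <= t) /\ (forall eps, 0 < eps -> exists t, S t /\ t < m + eps) /\ 0 <= m }.
Proof.
  intros Hne Hpos.
  destruct (completeness (fun y => exists t, S t /\ y = - t)) as [l [Hub Hl]].
  { exists 0. intros y [t [Ht ->]]. specialize (Hpos t Ht). lra. }
  { destruct Hne as [t Ht]. exists (-t). eauto. }
  exists (-l). split; [|split].
  - intros t Ht. assert (-t <= l) by (apply Hub; eauto). lra.
  - intros eps He. apply NNPP. intro Hn.
    assert (l <= l - eps).
    { apply Hl. intros y [t [Ht ->]]. destruct (Rle_or_lt (- l + eps) t). lra.
      exfalso. apply Hn. exists t. split; auto. }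
    lra.
  - assert (l <= 0). { apply Hl. intros y [t [Ht ->]]. specialize (Hpos t Ht). lra. } lra.
Qed.

Lemma sum_abs_ge (u : vec) n j : (j < n)%nat -> Rabs (u j) <= sumR (fun i => Rabs (u i)) n.
Proof.
  induction n; intro Hj. lia. cbn [sumR].
  assert (0 <= sumR (fun i => Rabs (u i)) n).
  { clear. induction n; cbn [sumR]. lra. pose proof (Rabs_pos (u n)). lra. }
  destruct (Nat.eq_dec j n) as [->|Hne]. lra.
  pose proof (IHn ltac:(lia)). pose proof (Rabs_pos (u n)). lra.
Qed.

Lemma sum_abs_nonneg (u : vec) n : 0 <= sumR (fun i => Rabs (u i)) n.
Proof. induction n; cbn [sumR]. lra. pose proof (Rabs_pos (u n)). lra. Qed.

Section Sep.
Variable n : nat.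
Variable G : vec -> Prop.
Hypothesis Gconv : forall u v th, G u -> G v -> 0 <= th <= 1 -> G (fun j => th * u j + (1 - th) * v j).
Hypothesis Gopen : forall v, G v -> exists rho, 0 < rho /\
   forall u, (forall j, (j < n)%nat -> Rabs (u j - v j) < rho) -> G u.
Hypothesis G0 : forall u, (forall j, (j < n)%nat -> u j = 0) -> ~ G u.

Lemma G_ext a b : (forall j, (j < n)%nat -> a j = b j) -> G a -> G b.
Proof.
  intros H Ha. destruct (Gopen a Ha) as [rho [Hr Hu]]. apply Hu. intros j Hj. rewrite H by auto.
  rewrite Rminus_diag, Rabs_R0. auto.
Qed.

Section W.
Variable w : vec.
Hypothesis Hw : G w.

Definition U (u : vec) := G (fun j => w j - u j).
Definition Sset (u : vec) (t : R) := 0 < t /\ U (fun j => u j / t).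

Lemma U_conv a b th : U a -> U b -> 0 <= th <= 1 -> U (fun j => th * a j + (1 - th) * b j).
Proof.
  intros Ha Hb Ht. unfold U. pose proof (Gconv _ _ th Ha Hb Ht). cbv beta in H.
  eapply G_ext; [|exact H]. intros j _. cbv beta. ring.
Qed.

Lemma U0 : U (fun _ => 0).
Proof. unfold U. eapply G_ext; [|exact Hw]. intros; cbv beta; ring. Qed.

Lemma Sset_ne u : exists t, Sset u t.
Proof.
  destruct (Gopen w Hw) as [rho [Hr Hu]].
  set (A := sumR (fun i => Rabs (u i)) n).
  assert (HA : 0 <= A) by apply sum_abs_nonneg.
  exists (A / rho + 1). assert (Ht : 0 < A / rho + 1) by (assert (0 <= A/rho) by (apply Rmult_le_pos; [lra| left; apply Rinv_0_lt_compat; lra]); lra).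
  split; auto. unfold U. apply Hu. intros j Hj.
  replace (w j - u j / (A / rho + 1) - w j) with (- (u j / (A / rho + 1))) by ring.
  rewrite Rabs_Ropp. unfold Rdiv. rewrite Rabs_mult, Rabs_inv, (Rabs_right (A * / rho + 1)) by lra.
  pose proof (sum_abs_ge u n j Hj). fold A in H.
  apply (Rmult_lt_reg_r (A * / rho + 1)). lra.
  rewrite Rmult_assoc, Rinv_l by lra.
  apply Rle_lt_trans with A. lra.
  replace (rho * (A * / rho + 1)) with (A + rho) by (field; lra). lra.
Qed.

Lemma Sset_pos u t : Sset u t -> 0 < t.
Proof. intros [H _]; auto. Qed.

Definition pg (u : vec) : R := proj1_sig (glb_pos (Sset u) (Sset_ne u) (Sset_pos u)).

Lemma pg_spec u : (forall t, Sset u t -> pg u <= t) /\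
   (forall eps, 0 < eps -> exists t, Sset u t /\ t < pg u + eps) /\ 0 <= pg u.
Proof. unfold pg. destruct (glb_pos _ _ _). simpl. auto. Qed.

Lemma Sset_up u t t' : Sset u t -> t <= t' -> Sset u t'.
Proof.
  intros [Ht HU] Htt. split. lra.
  pose proof (U_conv _ _ (t / t') HU U0) as H.
  assert (0 <= t / t' <= 1).
  { split. apply Rmult_le_pos; [lra|left; apply Rinv_0_lt_compat; lra].
    apply (Rmult_le_reg_r t'). lra. unfold Rdiv. rewrite Rmult_assoc, Rinv_l by lra. lra. }
  specialize (H H0). unfold U in *. eapply G_ext; [|exact H]. intros j _. cbv beta. field. lra.
Qed.

Lemma pg_nonneg u : 0 <= pg u.
Proof. apply pg_spec. Qed.

Lemma pg_hom c u : 0 < c -> pg (fun j => c * u j) = c * pg u.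
Proof.
  intro Hc. destruct (pg_spec u) as [A1 [A2 A3]]. destruct (pg_spec (fun j => c * u j)) as [B1 [B2 B3]].
  apply Rle_antisym.
  - apply le_eps. intros eps He. destruct (A2 (eps / c)) as [t [[Ht Hut] Htl]]. apply Rdiv_lt_0_compat; lra.
    apply Rle_lt_trans with (c * t). apply B1. split. nra.
    unfold U in *. eapply G_ext; [|exact Hut]. intros j _. cbv beta. field. lra.
    apply (Rmult_lt_compat_l c) in Htl; [|lra]. replace (c * (pg u + eps / c)) with (c * pg u + eps) in Htl by (field; lra). lra.
  - apply le_eps. intros eps He. destruct (B2 eps He) as [t [[Ht Hut] Htl]].
    assert (pg u <= t / c).
    { apply A1. split. apply Rdiv_lt_0_compat; lra. unfold U in *. eapply G_ext; [|exact Hut]. intros j _. cbv beta. field. lra. }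
    apply (Rmult_le_compat_l c) in H; [|lra]. replace (c * (t / c)) with t in H by (field; lra). lra.
Qed.

Lemma pg_sub u v : pg (fun j => u j + v j) <= pg u + pg v.
Proof.
  apply le_eps. intros eps He.
  destruct (pg_spec u) as [_ [A2 _]]. destruct (pg_spec v) as [_ [B2 _]].
  destruct (pg_spec (fun j => u j + v j)) as [C1 _].
  destruct (A2 (eps/2) ltac:(lra)) as [t1 [[Ht1 HU1] H1]].
  destruct (B2 (eps/2) ltac:(lra)) as [t2 [[Ht2 HU2] H2]].
  assert (Sset (fun j => u j + v j) (t1 + t2)).
  { split. lra. pose proof (U_conv _ _ (t1 / (t1 + t2)) HU1 HU2) as H.
    assert (0 <= t1 / (t1 + t2) <= 1).
    { split. apply Rmult_le_pos; [lra|left; apply Rinv_0_lt_compat; lra].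
      apply (Rmult_le_reg_r (t1 + t2)). lra. unfold Rdiv. rewrite Rmult_assoc, Rinv_l by lra. lra. }
    specialize (H H0). unfold U in *. eapply G_ext; [|exact H]. intros j _. cbv beta. field. lra. }
  specialize (C1 _ H). lra.
Qed.

Lemma pg_w : 1 <= pg w.
Proof.
  destruct (Rle_or_lt 1 (pg w)) as [h|h]; auto. exfalso.
  destruct (pg_spec w) as [_ [A2 _]]. destruct (A2 (1 - pg w) ltac:(lra)) as [t [Ht Htl]].
  assert (Sset w 1) by (apply (Sset_up w t); auto; lra).
  destruct H as [_ HU]. unfold U in HU. eapply G0; [|exact HU]. intros j _. cbv beta. field.
Qed.

Lemma pg_U u : U u -> pg u < 1.
Proof.
  intro HU. destruct (Gopen _ HU) as [rho [Hr Hrho]].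
  set (A := sumR (fun i => Rabs (u i)) n). assert (HA : 0 <= A) by apply sum_abs_nonneg.
  set (th := rho / (2 * (A + 1))).
  assert (Hth : 0 < th) by (unfold th; apply Rdiv_lt_0_compat; lra).
  assert (Sset u (/ (1 + th))).
  { split. apply Rinv_0_lt_compat; lra. unfold U. apply Hrho. intros j Hj.
    replace (w j - u j / / (1 + th) - (w j - u j)) with (- (th * u j)) by (field; lra).
    rewrite Rabs_Ropp, Rabs_mult, Rabs_right by lra.
    pose proof (sum_abs_ge u n j Hj). fold A in H.
    apply Rle_lt_trans with (th * A). apply Rmult_le_compat_l; lra.
    unfold th. apply (Rmult_lt_reg_r (2 * (A + 1))). lra.
    replace (rho / (2 * (A + 1)) * A * (2 * (A + 1))) with (rho * A) by (field; lra). nra. }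
  destruct (pg_spec u) as [A1 _]. specialize (A1 _ H).
  assert (/ (1 + th) < 1).
  { apply (Rmult_lt_reg_r (1 + th)). lra. rewrite Rinv_l by lra. lra. }
  lra.
Qed.

Lemma pg_ext a b : (forall j, (j < n)%nat -> a j = b j) -> pg a = pg b.
Proof.
  intro H.
  assert (Hs : forall t, Sset a t -> Sset b t).
  { intros t [Ht HU]. split; auto. unfold U in *. eapply G_ext; [|exact HU]. intros j Hj. cbv beta. rewrite H; auto. }
  assert (Hs' : forall t, Sset b t -> Sset a t).
  { intros t [Ht HU]. split; auto. unfold U in *. eapply G_ext; [|exact HU]. intros j Hj. cbv beta. rewrite H; auto. }
  destruct (pg_spec a) as [A1 [A2 _]]. destruct (pg_spec b) as [B1 [B2 _]].
  apply Rle_antisym; apply le_eps; intros eps He.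
  - destruct (B2 eps He) as [t [Ht Htl]]. specialize (A1 t (Hs' t Ht)). lra.
  - destruct (A2 eps He) as [t [Ht Htl]]. specialize (B1 t (Hs t Ht)). lra.
Qed.

Lemma pg_zero : pg (fun _ => 0) = 0.
Proof.
  apply Rle_antisym; [|apply pg_nonneg]. destruct (pg_spec (fun _ => 0)) as [A1 _].
  apply le_eps. intros eps He. apply Rle_lt_trans with (eps/2); [|lra]. apply A1. split. lra.
  unfold U. eapply G_ext; [|exact Hw]. intros; cbv beta; field. lra.
Qed.

Lemma SEP_w : exists lam, forall v, G v -> 0 < dot lam v n.
Proof.
  destruct (HB pg pg_sub pg_hom pg_nonneg w pg_w n) as [lam Hlam].
  exists lam. intros v Hv.
  set (tr := fun (x : vec) j => if Nat.ltb j n then x j else 0).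
  assert (Htr : forall x, supp n (tr x)).
  { intros x j Hj. unfold tr. destruct (Nat.ltb j n) eqn:E; auto. apply Nat.ltb_lt in E. lia. }
  assert (Htrj : forall x j, (j < n)%nat -> tr x j = x j).
  { intros x j Hj. unfold tr. apply Nat.ltb_lt in Hj. rewrite Hj. auto. }
  pose proof (Hlam 1 (tr (fun j => - w j)) (Htr _)) as H1.
  rewrite (pg_ext _ (fun _ => 0)) in H1 by (intros j Hj; rewrite Htrj by auto; ring).
  rewrite pg_zero in H1.
  rewrite (dot_ext lam lam _ (fun j => -1 * w j)) in H1 by (intros j Hj; rewrite Htrj by auto; ring).
  rewrite dot_scal in H1.
  pose proof (Hlam 0 (tr (fun j => w j - v j)) (Htr _)) as H2.
  rewrite (pg_ext _ (fun j => w j - v j)) in H2 by (intros j Hj; rewrite Htrj by auto; ring).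
  assert (HU : U (fun j => w j - v j)) by (unfold U; eapply G_ext; [|exact Hv]; intros; cbv beta; ring).
  pose proof (pg_U _ HU).
  rewrite (dot_ext lam lam _ (fun j => w j + -1 * v j)) in H2 by (intros j Hj; rewrite Htrj by auto; ring).
  rewrite dot_add, dot_scal in H2. lra.
Qed.

End W.

Lemma SEP : exists lam, forall v, G v -> 0 < dot lam v n.
Proof.
  destruct (classic (exists w, G w)) as [[w Hw]|Hno].
  - apply (SEP_w w Hw).
  - exists (fun _ => 0). intros v Hv. exfalso. eauto.
Qed.

End Sep.

Lemma sumR_term_le (f : nat -> R) m j : (forall i, 0 <= f i) -> (j < m)%nat -> f j <= sumR f m.
Proof.
  intros Hf Hj. induction m. lia. cbn [sumR].
  assert (0 <= sumR f m). { clear -Hf. induction m; cbn [sumR]. lra. pose proof (Hf m). lra. }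
  destruct (Nat.eq_dec j m) as [->|Hne]. lra. pose proof (IHm ltac:(lia)). pose proof (Hf m). lra.
Qed.

Lemma sumR_nonneg (f : nat -> R) m : (forall i, 0 <= f i) -> 0 <= sumR f m.
Proof. intros Hf. induction m; cbn [sumR]. lra. pose proof (Hf m). lra. Qed.

Fixpoint maxR (f : nat -> R) (m : nat) : R :=
  match m with O => 0 | S k => Rmax (maxR f k) (f k) end.

Lemma maxR_ge f m j : (j < m)%nat -> f j <= maxR f m.
Proof.
  induction m; intro Hj. lia. simpl. destruct (Nat.eq_dec j m) as [->|Hne]. apply Rmax_r.
  eapply Rle_trans. apply IHm. lia. apply Rmax_l.
Qed.

Lemma maxR_lt f m e : 0 < e -> (forall j, (j < m)%nat -> f j < e) -> maxR f m < e.
Proof.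
  intros He H. induction m; simpl. auto. apply Rmax_lub_lt. apply IHm. intros; apply H; lia. apply H; lia.
Qed.

Section FMsec.
Variable X : Banach.
Variable g : dual X -> ER.
Hypothesis Hprop : proper g.
Hypothesis Hconv : convex g.
Hypothesis Hlsc : weakstar_lsc g.

Fixpoint lcomb (lam : vec) (l : list X) (m : nat) : X :=
  match m with O => vzero X | S k => vadd X (lcomb lam l k) (vscal X (lam k) (nth k l (vzero X))) end.

Lemma dfun_lcomb (b : dual X) lam l m :
  b (lcomb lam l m) = sumR (fun j => lam j * b (nth j l (vzero X))) m.
Proof. induction m; simpl. apply dfun_zero. rewrite dfun_add, dfun_scal, IHm. ring. Qed.

Lemma FM1 a c : ~ ER_le (g a) (Fin c) ->
  (exists xh beta, (forall b r, g b = Fin r -> b xh - r <= beta) /\ c <= a xh - beta) \/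
  (exists xv th, 0 < th /\ forall b r, g b = Fin r -> a xv + th <= b xv).
Proof.
  intro Hac. destruct (Hlsc c a Hac) as [l [eps [He Hnb]]].
  set (m := length l). set (xj := fun j => nth j l (vzero X)).
  set (G := fun v : vec => exists b r, g b = Fin r /\
              (forall j, (j < m)%nat -> Rabs (v j - (b (xj j) - a (xj j))) < eps) /\ r - c < v m).
  assert (Gconv : forall u v th, G u -> G v -> 0 <= th <= 1 -> G (fun j => th * u j + (1 - th) * v j)).
  { intros u v th [b1 [r1 [Hr1 [Hu1 Hu2]]]] [b2 [r2 [Hr2 [Hv1 Hv2]]]] Hth.
    destruct (Req_dec th 0) as [->|H0].
    { exists b2, r2. split; auto. split. intros j Hj. replace (0 * u j + (1 - 0) * v j) with (v j) by ring. auto.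
      lra. }
    destruct (Req_dec th 1) as [->|H1].
    { exists b1, r1. split; auto. split. intros j Hj. replace (1 * u j + (1 - 1) * v j) with (u j) by ring. auto.
      lra. }
    set (b := dadd X (dscal X th b1) (dscal X (1 - th) b2)).
    assert (Hcb := Hconv b1 b2 b th ltac:(lra) ltac:(intro x; simpl; ring)).
    rewrite Hr1, Hr2 in Hcb. simpl in Hcb.
    destruct (g b) as [r|] eqn:Eb; simpl in Hcb; [|contradiction].
    exists b, r. split; auto. split.
    - intros j Hj. specialize (Hu1 j Hj). specialize (Hv1 j Hj).
      apply Rabs_def2 in Hu1. apply Rabs_def2 in Hv1.
      assert (E : th * u j + (1 - th) * v j - (b (xj j) - a (xj j)) =
                  th * (u j - (b1 (xj j) - a (xj j))) + (1 - th) * (v j - (b2 (xj j) - a (xj j))))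
        by (unfold b; simpl; ring).
      rewrite E. apply Rabs_def1; nra.
    - nra. }
  assert (Gopen : forall v, G v -> exists rho, 0 < rho /\
             forall u, (forall j, (j < S m)%nat -> Rabs (u j - v j) < rho) -> G u).
  { intros v [b [r [Hr [Hv1 Hv2]]]].
    set (f := fun j => Rabs (v j - (b (xj j) - a (xj j)))).
    assert (HM : maxR f m < eps) by (apply maxR_lt; auto).
    exists (Rmin (eps - maxR f m) (v m - (r - c))). split. apply Rmin_glb_lt; lra.
    intros u Hu. exists b, r. split; auto. split.
    - intros j Hj. pose proof (Hu j ltac:(lia)). pose proof (maxR_ge f m j Hj). assert (Hfj : f j = Rabs (v j - (b (xj j) - a (xj j)))) by reflexivity. rewrite Hfj in H0.
      pose proof (Rmin_l (eps - maxR f m) (v m - (r - c))).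
      pose proof (Rabs_triang (u j - v j) (v j - (b (xj j) - a (xj j)))).
      replace (u j - v j + (v j - (b (xj j) - a (xj j)))) with (u j - (b (xj j) - a (xj j))) in H2 by ring.
      lra.
    - pose proof (Hu m ltac:(lia)). pose proof (Rmin_r (eps - maxR f m) (v m - (r - c))).
      apply Rabs_def2 in H. lra. }
  assert (G0 : forall u, (forall j, (j < S m)%nat -> u j = 0) -> ~ G u).
  { intros u Hu [b [r [Hr [Hu1 Hu2]]]].
    apply (Hnb b).
    - intros x Hx. destruct (In_nth l x (vzero X) Hx) as [j [Hj Hjx]].
      specialize (Hu1 j Hj). rewrite Hu in Hu1 by lia. unfold xj in Hu1. rewrite Hjx in Hu1.
      rewrite <- Rabs_Ropp. replace (- (b x - a x)) with (0 - (b x - a x)) by ring. auto.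
    - rewrite Hr. simpl. rewrite Hu in Hu2 by lia. lra. }
  destruct (SEP (S m) G Gconv Gopen G0) as [lam Hlam].
  set (xv := lcomb lam l m).
  assert (HD : forall b : dual X, b xv - a xv = dot lam (fun j => b (xj j) - a (xj j)) m).
  { intro b. unfold xv, dot. rewrite !dfun_lcomb. rewrite <- sumR_minus. apply sumR_ext. intros. unfold xj. ring. }
  assert (Hkey : forall b r s (y : vec), g b = Fin r -> r - c < s -> (forall j, (j < m)%nat -> Rabs (y j) < eps) ->
            0 < dot lam (fun j => b (xj j) - a (xj j) - y j) m + lam m * s).
  { intros b r s y Hr Hs Hy.
    set (v := fun j => if Nat.ltb j m then b (xj j) - a (xj j) - y j else s).
    assert (Gv : G v).
    { exists b, r. split; auto. split.
      - intros j Hj. unfold v. assert (Nat.ltb j m = true) by (apply Nat.ltb_lt; auto). rewrite H.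
        replace (b (xj j) - a (xj j) - y j - (b (xj j) - a (xj j))) with (- y j) by ring. rewrite Rabs_Ropp. auto.
      - unfold v. rewrite Nat.ltb_irrefl. auto. }
    pose proof (Hlam v Gv). unfold dot in H. cbn [sumR] in H. fold (dot lam v m) in H.
    unfold v at 2 in H. rewrite Nat.ltb_irrefl in H.
    rewrite (dot_ext lam lam v (fun j => b (xj j) - a (xj j) - y j)) in H. auto.
    intros j Hj. unfold v. assert (Nat.ltb j m = true) by (apply Nat.ltb_lt; auto). rewrite H0. auto. }
  assert (Hkey0 : forall b r s, g b = Fin r -> r - c < s -> 0 < (b xv - a xv) + lam m * s).
  { intros b r s Hr Hs. pose proof (Hkey b r s (fun _ => 0) Hr Hs ltac:(intros; cbv beta; rewrite Rabs_R0; auto)).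
    rewrite HD. rewrite (dot_ext lam lam _ (fun j => b (xj j) - a (xj j))) in H by (intros; ring). auto. }
  destruct Hprop as [b1 Hb1]. unfold dom in Hb1. destruct (g b1) as [r1|] eqn:Er1; [|congruence].
  assert (Hmu : 0 <= lam m).
  { destruct (Rle_or_lt 0 (lam m)) as [h|h]; auto. exfalso.
    set (D1 := b1 xv - a xv).
    set (s := Rmax (r1 - c + 1) 0 + (Rabs D1 + 1) / (- lam m)).
    assert (Hs : r1 - c < s).
    { unfold s. pose proof (Rmax_l (r1 - c + 1) 0).
      assert (0 <= (Rabs D1 + 1) / - lam m) by (apply Rmult_le_pos; [pose proof (Rabs_pos D1); lra| left; apply Rinv_0_lt_compat; lra]). lra. }
    pose proof (Hkey0 b1 r1 s Er1 Hs). fold D1 in H.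
    unfold s in H. rewrite Rmult_plus_distr_l in H.
    replace (lam m * ((Rabs D1 + 1) / - lam m)) with (- (Rabs D1 + 1)) in H by (field; lra).
    pose proof (Rmax_r (r1 - c + 1) 0). assert (lam m * Rmax (r1 - c + 1) 0 <= 0) by nra.
    pose proof (Rle_abs D1). lra. }
  destruct (Rle_lt_or_eq_dec 0 (lam m) Hmu) as [Hpos|Hzero].
  - left. exists (vscal X (- / lam m) xv), (a (vscal X (- / lam m) xv) - c). split; [|lra].
    intros b r Hr. rewrite !dfun_scal.
    assert (HH : 0 <= (b xv - a xv) + lam m * (r - c)).
    { destruct (Rle_or_lt 0 ((b xv - a xv) + lam m * (r - c))) as [h|h]; auto. exfalso.
      set (e := - ((b xv - a xv) + lam m * (r - c)) / (2 * lam m)).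
      assert (0 < e) by (unfold e; apply Rdiv_lt_0_compat; lra).
      pose proof (Hkey0 b r (r - c + e) Hr ltac:(lra)).
      replace (b xv - a xv + lam m * (r - c + e)) with (((b xv - a xv) + lam m * (r - c)) / 2) in H0
        by (unfold e; field; lra). lra. }
    apply (Rmult_le_reg_l (lam m)). auto.
    replace (lam m * (- / lam m * b xv - r)) with (- b xv - lam m * r) by (field; lra).
    replace (lam m * (- / lam m * a xv - c)) with (- a xv - lam m * c) by (field; lra).
    lra.
  - right. set (S2 := sumR (fun j => lam j * lam j) m).
    set (A := sumR (fun j => Rabs (lam j)) m).
    assert (HA : 0 <= A) by (apply sumR_nonneg; intro; apply Rabs_pos).
    set (tau := eps / (2 * (A + 1))).
    assert (Htau : 0 < tau) by (unfold tau; apply Rdiv_lt_0_compat; lra).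
    assert (HS2 : 0 < S2).
    { destruct (Rle_or_lt S2 0) as [h|h]; auto. exfalso.
      assert (Hz : forall j, (j < m)%nat -> lam j = 0).
      { intros j Hj. pose proof (sumR_term_le (fun j => lam j * lam j) m j (fun i => ltac:(nra)) Hj).
        fold S2 in H. nra. }
      pose proof (Hkey0 b1 r1 (r1 - c + 1) Er1 ltac:(lra)). rewrite HD in H. rewrite <- Hzero in H.
      rewrite (dot_ext lam (fun _ => 0) _ (fun _ => 0)) in H. unfold dot in H.
      assert (sumR (fun j => 0 * 0) m = 0). { clear. induction m; cbn [sumR]. auto. rewrite IHm. ring. }
      lra. intros j Hj. rewrite Hz by auto. ring. }
    exists xv, (tau * S2). split. nra.
    intros b r Hr.
    pose proof (Hkey b r (r - c + 1) (fun j => tau * lam j) Hr ltac:(lra)).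
    assert (Hy : forall j, (j < m)%nat -> Rabs (tau * lam j) < eps).
    { intros j Hj. rewrite Rabs_mult, Rabs_right by lra.
      pose proof (sumR_term_le (fun j => Rabs (lam j)) m j (fun i => Rabs_pos _) Hj). fold A in H0.
      apply Rle_lt_trans with (tau * A). apply Rmult_le_compat_l; lra.
      unfold tau. apply (Rmult_lt_reg_r (2 * (A + 1))). lra.
      replace (eps / (2 * (A + 1)) * A * (2 * (A + 1))) with (eps * A) by (field; lra). nra. }
    specialize (H Hy). rewrite <- Hzero in H.
    rewrite (dot_ext lam lam _ (fun j => (b (xj j) - a (xj j)) + (-tau) * lam j)) in H by (intros; ring).
    rewrite dot_add, dot_scal in H. rewrite <- HD in H. unfold dot in H. fold S2 in H.
    lra.
Qed.

Lemma FM a c : ~ ER_le (g a) (Fin c) ->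
  exists xh beta, (forall b r, g b = Fin r -> b xh - r <= beta) /\ c < a xh - beta.
Proof.
  intro Hac.
  set (c2 := match g a with Fin v => (c + v) / 2 | PInf => c + 1 end).
  assert (Hc2 : c < c2 /\ ~ ER_le (g a) (Fin c2)).
  { unfold c2. destruct (g a); simpl in *; split; lra. }
  destruct Hc2 as [Hcc2 Hac2].
  destruct (FM1 a c2 Hac2) as [[xh [beta [H1 H2]]]|[xv [th [Hth Hv]]]].
  - exists xh, beta. split; auto. lra.
  - destruct Hprop as [a1 Ha1]. unfold dom in Ha1. destruct (g a1) as [r1|] eqn:Er1; [|congruence].
    destruct (FM1 a1 (r1 - 1)) as [[x1 [b1 [H1 H2]]]|[xv' [th' [Hth' Hv']]]].
    { rewrite Er1. simpl. lra. }
    + set (K := (Rabs (c - a x1 + b1) + 1) / th).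
      assert (HK : 0 < K) by (unfold K; apply Rdiv_lt_0_compat; [pose proof (Rabs_pos (c - a x1 + b1)); lra| lra]).
      exists (vadd X x1 (vscal X (-K) xv)), (b1 - K * (a xv + th)). split.
      * intros b r Hr. rewrite dfun_add, dfun_scal. pose proof (H1 b r Hr). pose proof (Hv b r Hr). nra.
      * rewrite dfun_add, dfun_scal.
        replace (a x1 + - K * a xv - (b1 - K * (a xv + th))) with (a x1 - b1 + K * th) by ring.
        unfold K. replace ((Rabs (c - a x1 + b1) + 1) / th * th) with (Rabs (c - a x1 + b1) + 1) by (field; lra).
        pose proof (Rle_abs (c - a x1 + b1)). lra.
    + exfalso. pose proof (Hv' a1 r1 Er1). lra.
Qed.

End FMsec.

Theorem mainTheorem11 (X : Banach) (g : dual X -> ER) (T : dual X -> X -> Prop)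
  (a0 : dual X) :
  proper g -> convex g -> weakstar_lsc g ->
  (forall a x, T a x -> subdiff g a x) ->
  DT T a0 ->
  ((exists a, dual_interior (dom g) a) ->
   dual_dense_in (DT T) (dual_interior (dom g)) ->
   forall a, dom g a -> ER_sup (hset T a0 a) (ER_minus (g a) (g a0))) /\
  ((exists x, X_interior (dom_conj_X g) x) ->
   X_dense_in (ImT T) (X_interior (dom_conj_X g)) ->
   forall a, ER_sup (hset T a0 a) (ER_minus (g a) (g a0))).
Proof.
  intros Hprop Hconv Hlsc HT HD. split.
  - intros Hi Hd a Ha. exact (partI X g T a0 Hconv Hlsc HT HD Hi Hd a Ha).
  - intros Hi Hd a. apply ER_sup_intro.
    + intros r Hr. apply (hset_upper X T a0 g HT a r Hr). destruct HD as [x0 Hx0]. apply (HT _ _ Hx0).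
    + apply (partII_key X g T a0 Hprop HT HD (FM X g Hprop Hconv Hlsc) Hi Hd a).
Qed.
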